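(* Let $K$ be a field of characteristic $0$ and let $\mathcal{U}$ be the variety of $K$-algebras that are alternative and satisfy $(ab)c=(ba)c$. For $n\ge1$ let $U_n$ denote the multilinear component of degree $n$ of the free $\mathcal{U}$-algebra on $x_1,\dots,x_n$. Then a basis of $U_n$ is given by: \begin{itemize} \item $n=1$: $x_1$; \quad $n=2$: $x_1x_2,\ x_2x_1$; \item $n=3$: $(x_1x_2)x_3,\ (x_1x_3)x_2,\ x_3(x_1x_2),\ x_3(x_2x_1)$; \item $n\ge4$: the $n$ left-normed monomials $((\cdots((x_{i_1}x_{i_2})x_{i_3})\cdots)x_{i_{n-1}})x_k$, $k=1,\dots,n$, where $i_1<\cdots<i_{n-1}$ is the increasing enumeration of $\{1,\dots,n\}\setminus\{k\}$. \end{itemize}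
   Context: An algebra is alternative if $(a,a,b)=0=(a,b,b)$ for all $a,b$, where $(a,b,c)=(ab)c-a(bc)$. This variety $\mathcal{U}$ is the Koszul dual (Ginzburg–Kapranov) of the variety $\mathcal{LS}_{\mathfrak{A}_2}$ of left-symmetric algebras (those with $(a,b,c)=(b,a,c)$) satisfying additionally $a(bc)+b(ac)+a(cb)+c(ab)+b(ca)+c(ba)=0$. *)

(* Defs.v *)
From HB Require Import structures.
From mathcomp Require Import all_boot all_order all_algebra.
Set Implicit Arguments. Unset Strict Implicit. Unset Printing Implicit Defensive.
Import GRing.Theory.
Local Open Scope ring_scope.

(* Nonassociative monomials: binary trees whose leaves are variables x_i,
   the index i being a natural number (we use x_1, ..., x_n). *)
Inductive nmon : Type :=
| Leaf of nat
| Node of nmon & nmon.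

Fixpoint leaves (t : nmon) : seq nat :=
  match t with
  | Leaf i => [:: i]
  | Node l r => leaves l ++ leaves r
  end.

Definition multilinear (n : nat) (t : nmon) : bool :=
  perm_eq (leaves t) (iota 1 n).

Fixpoint nm_eval (A : Type) (mul : A -> A -> A) (a : nat -> A) (t : nmon) : A :=
  match t with
  | Leaf i => a i
  | Node l r => mul (nm_eval mul a l) (nm_eval mul a r)
  end.

Definition U_algebra (K : fieldType) (A : lmodType K) (mul : A -> A -> A) : Prop :=
  [/\ (forall (k : K) (x y z : A), mul (k *: x + y) z = k *: mul x z + mul y z),
      (forall (k : K) (x y z : A), mul x (k *: y + z) = k *: mul x y + mul x z),
      (forall x y : A, mul (mul x x) y = mul x (mul x y)),
      (forall x y : A, mul (mul x y) y = mul x (mul y y)) &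
      (forall x y z : A, mul (mul x y) z = mul (mul y x) z)].

(* Left-normed monomial ((..(x_{i1} x_{i2}) ..) x_{im}); the default leaf
   is only used for the empty sequence (never in the statement). *)
Definition lnorm (d : nat) (s : seq nat) : nmon :=
  match s with
  | [::] => Leaf d
  | h :: t => foldl (fun m i => Node m (Leaf i)) (Leaf h) t
  end.

Definition Ubasis (n : nat) : seq nmon :=
  match n with
  | 0 => [::]
  | 1 => [:: Leaf 1]
  | 2 => [:: Node (Leaf 1) (Leaf 2); Node (Leaf 2) (Leaf 1)]
  | 3 => [:: Node (Node (Leaf 1) (Leaf 2)) (Leaf 3);
             Node (Node (Leaf 1) (Leaf 3)) (Leaf 2);
             Node (Leaf 3) (Node (Leaf 1) (Leaf 2));
             Node (Leaf 3) (Node (Leaf 2) (Leaf 1))]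
  | _ => [seq Node (lnorm k [seq i <- iota 1 n | i != k]) (Leaf k) | k <- iota 1 n]
  end.

(* Equality of two K-linear combinations of monomials in the free U-algebra,
   i.e. their difference is an identity of the variety U (holds in every
   U-algebra under every evaluation of the variables). *)
Definition U_eq (K : fieldType) (f g : seq (K * nmon)) : Prop :=
  forall (A : lmodType K) (mul : A -> A -> A), U_algebra mul ->
  forall a : nat -> A,
    \sum_(p <- f) p.1 *: nm_eval mul a p.2 = \sum_(p <- g) p.1 *: nm_eval mul a p.2.

(* Main.v *)
Require Import Defs.
From HB Require Import structures.
From mathcomp Require Import all_boot all_order all_algebra.
From mathcomp Require Import ring zify.
Set Implicit Arguments. Unset Strict Implicit. Unset Printing Implicit Defensive.
Import GRing.Theory.
Local Open Scope ring_scope.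

Inductive lexp : Type :=
| LAtom of nat | LAdd of lexp & lexp | LOpp of lexp | LZ of lexp & int | LZero.

Fixpoint lcoef (e : lexp) (i : nat) : int :=
  match e with
  | LAtom j => if i == j then 1 else 0
  | LAdd a b => lcoef a i + lcoef b i
  | LOpp a => - lcoef a i
  | LZ a z => lcoef a i * z
  | LZero => 0
  end.

Section Leval.
Variable M : zmodType.
Fixpoint leval (env : seq M) (e : lexp) : M :=
  match e with
  | LAtom j => nth 0 env j
  | LAdd a b => leval env a + leval env b
  | LOpp a => - leval env a
  | LZ a z => leval env a *~ z
  | LZero => 0
  end.

Lemma leval_sum env e : leval env e = \sum_(i < size env) nth 0 env i *~ lcoef e i.
Proof.
elim: e => [j|a IHa b IHb|a IHa|a IHa z|] /=.
- have [hj|hj] := ltnP j (size env).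
  + rewrite (bigD1 (Ordinal hj)) //= eqxx mulr1z big1 ?addr0 // => i /negbTE.
    by rewrite -val_eqE /= => ->.
  + rewrite nth_default // big1 // => i _.
    have : (i : nat) != j by rewrite neq_ltn (leq_trans (ltn_ord i) hj).
    by move=> /negbTE ->.
- by rewrite IHa IHb -big_split /=; apply: eq_bigr => i _; rewrite mulrzDr.
- by rewrite IHa -sumrN; apply: eq_bigr => i _; rewrite mulrNz.
- by rewrite IHa mulrz_suml; apply: eq_bigr => i _; rewrite mulrzA.
- by rewrite big1 // => i _; rewrite mulr0z.
Qed.

Lemma lin_eq env e1 e2 :
  all (fun i => lcoef e1 i == lcoef e2 i) (iota 0 (size env)) ->
  leval env e1 = leval env e2.
Proof.
move/allP=> H; rewrite !leval_sum; apply: eq_bigr => i _.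
have Hi : (i : nat) \in iota 0 (size env) by rewrite mem_iota /= add0n ltn_ord.
by have /eqP -> := H i Hi.
Qed.
End Leval.

Ltac isIn x l :=
  lazymatch l with
  | nil => constr:(false)
  | cons x _ => constr:(true)
  | cons _ ?l' => isIn x l'
  end.
Ltac addL x l := let b := isIn x l in
  lazymatch b with true => l | false => constr:(cons x l) end.
Ltac collect t l :=
  lazymatch t with
  | ?a + ?b => let l := collect a l in collect b l
  | - ?a => collect a l
  | ?a *~ _ => collect a l
  | ?a *+ _ => collect a l
  | 0 => l
  | _ => addL t l
  end.
Ltac idx x l :=
  lazymatch l with
  | cons x _ => constr:(O)
  | cons _ ?l' => let n := idx x l' in constr:(S n)
  end.
Ltac reify t l :=
  lazymatch t with
  | ?a + ?b => let ea := reify a l in let eb := reify b l in constr:(LAdd ea eb)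
  | - ?a => let ea := reify a l in constr:(LOpp ea)
  | ?a *~ ?z => let ea := reify a l in constr:(LZ ea z)
  | ?a *+ ?n => let ea := reify a l in constr:(LZ ea (Posz n))
  | 0 => constr:(LZero)
  | _ => let n := idx t l in constr:(LAtom n)
  end.
Ltac lin_solve :=
  lazymatch goal with
  | |- @eq ?T ?x ?y =>
    let l0 := constr:(@nil T) in
    let l1 := collect x l0 in let l := collect y l1 in
    let ex := reify x l in let ey := reify y l in
    change (leval l ex = leval l ey); apply: lin_eq; vm_compute; reflexivity
  end.



Ltac lin_use h :=
  lazymatch type of h with ?X = ?Y =>
  lazymatch goal with |- ?L = ?R =>
    apply/eqP; rewrite -subr_eq0; apply/eqP;
    first [ transitivity (X - Y); [lin_solve | by rewrite h subrr]
          | transitivity (Y - X); [lin_solve | by rewrite h subrr] ]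
  end end.

Section UAlg.
Variables (K : fieldType) (A : lmodType K) (mul : A -> A -> A).
Hypothesis HU : U_algebra mul.

Lemma umulDl x y z : mul (x + y) z = mul x z + mul y z.
Proof. by move: HU; rewrite /U_algebra => -[h _ _ _ _]; have := h 1 x y z; rewrite !scale1r. Qed.
Lemma umulDr x y z : mul x (y + z) = mul x y + mul x z.
Proof. by move: HU; rewrite /U_algebra => -[_ h _ _ _]; have := h 1 x y z; rewrite !scale1r. Qed.
Lemma umul0l z : mul 0 z = 0.
Proof. have h := umulDl 0 0 z; rewrite addr0 in h. by apply: (addrI (mul 0 z)); rewrite -h addr0. Qed.
Lemma umul0r z : mul z 0 = 0.
Proof. have h := umulDr z 0 0; rewrite addr0 in h. by apply: (addrI (mul z 0)); rewrite -h addr0. Qed.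
Lemma umulNl x z : mul (- x) z = - mul x z.
Proof. by apply/eqP; rewrite -addr_eq0 -umulDl addNr umul0l. Qed.
Lemma umulNr x z : mul z (- x) = - mul z x.
Proof. by apply/eqP; rewrite -addr_eq0 -umulDr addNr umul0r. Qed.
Lemma umulZl k x z : mul (k *: x) z = k *: mul x z.
Proof. by move: HU; rewrite /U_algebra => -[h _ _ _ _]; have := h k x 0 z; rewrite addr0 umul0l addr0. Qed.
Lemma umulZr k x z : mul z (k *: x) = k *: mul z x.
Proof. by move: HU; rewrite /U_algebra => -[_ h _ _ _]; have := h k z x 0; rewrite addr0 umul0r addr0. Qed.
Lemma lalt x y : mul (mul x x) y = mul x (mul x y).
Proof. by move: HU; rewrite /U_algebra => -[]. Qed.
Lemma ralt x y : mul (mul x y) y = mul x (mul y y).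
Proof. by move: HU; rewrite /U_algebra => -[]. Qed.
Lemma comm3 x y z : mul (mul x y) z = mul (mul y x) z.
Proof. by move: HU; rewrite /U_algebra => -[]. Qed.

Lemma F1 x y z : mul (mul x y) z - mul x (mul y z) + (mul (mul y x) z - mul y (mul x z)) = 0.
Proof.
have h := lalt (x + y) z; rewrite !(umulDl, umulDr) (lalt x z) (lalt y z) in h.
lin_use h.
Qed.
Lemma F2 x y z : mul (mul x y) z - mul x (mul y z) + (mul (mul x z) y - mul x (mul z y)) = 0.
Proof.
have h := ralt x (y + z); rewrite !(umulDl, umulDr) (ralt x y) (ralt x z) in h.
lin_use h.
Qed.
Lemma F3 x y z : mul (mul x y) z - mul (mul y x) z = 0.
Proof. by rewrite comm3 subrr. Qed.

Lemma F1r x y z w : mul (mul (mul x y) z) w - mul (mul x (mul y z)) w + (mul (mul (mul y x) z) w - mul (mul y (mul x z)) w) = 0.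
Proof. have h := congr1 (mul^~ w) (F1 x y z); rewrite /= umul0l !(umulDl, umulNl) in h; lin_use h. Qed.
Lemma F2r x y z w : mul (mul (mul x y) z) w - mul (mul x (mul y z)) w + (mul (mul (mul x z) y) w - mul (mul x (mul z y)) w) = 0.
Proof. have h := congr1 (mul^~ w) (F2 x y z); rewrite /= umul0l !(umulDl, umulNl) in h; lin_use h. Qed.
Lemma F3r x y z w : mul (mul (mul x y) z) w - mul (mul (mul y x) z) w = 0.
Proof. have h := congr1 (mul^~ w) (F3 x y z); rewrite /= umul0l !(umulDl, umulNl) in h; lin_use h. Qed.
Lemma F1l x y z w : mul w (mul (mul x y) z) - mul w (mul x (mul y z)) + (mul w (mul (mul y x) z) - mul w (mul y (mul x z))) = 0.
Proof. have h := congr1 (mul w) (F1 x y z); rewrite /= umul0r !(umulDr, umulNr) in h; lin_use h. Qed.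
Lemma F2l x y z w : mul w (mul (mul x y) z) - mul w (mul x (mul y z)) + (mul w (mul (mul x z) y) - mul w (mul x (mul z y))) = 0.
Proof. have h := congr1 (mul w) (F2 x y z); rewrite /= umul0r !(umulDr, umulNr) in h; lin_use h. Qed.
Lemma F3l x y z w : mul w (mul (mul x y) z) - mul w (mul (mul y x) z) = 0.
Proof. have h := congr1 (mul w) (F3 x y z); rewrite /= umul0r !(umulDr, umulNr) in h; lin_use h. Qed.

Hypothesis charK0 : [pchar K] =i pred0.
Lemma lin_cancel (L R : A) (D : nat) : (L - R) *+ D = 0 -> (0 < D)%N -> L = R.
Proof.
move=> h hD; apply/eqP; rewrite -subr_eq0; apply/eqP.
move: h; rewrite -scaler_nat => /eqP; rewrite scaler_eq0 => /orP [|/eqP //].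
by move/pcharf0P: charK0 => -> /eqP hD0; rewrite hD0 in hD.
Qed.
Lemma K4 (a b c d : A) : mul (mul (mul (a) (b)) (c)) (d) = mul (mul (a) (b)) (mul (c) (d)).
Proof.
have E : ((mul (mul (mul (a) (b)) (c)) (d)) - (mul (mul (a) (b)) (mul (c) (d)))) *+ 6 = (((mul (mul (mul (a) (b)) (c)) (d)) - (mul (mul (a) (b)) (mul (c) (d)))) + ((mul (mul (mul (a) (b)) (d)) (c)) - (mul (mul (a) (b)) (mul (d) (c))))) *~ (Posz 6) + (((mul (mul (mul (a) (c)) (b)) (d)) - (mul (mul (a) (c)) (mul (b) (d)))) + ((mul (mul (b) (mul (a) (c))) (d)) - (mul (b) (mul (mul (a) (c)) (d))))) *~ (Negz 0) + (((mul (mul (mul (a) (c)) (b)) (d)) - (mul (mul (a) (c)) (mul (b) (d)))) + ((mul (mul (mul (a) (c)) (d)) (b)) - (mul (mul (a) (c)) (mul (d) (b))))) *~ (Posz 1) + (((mul (mul (mul (c) (a)) (b)) (d)) - (mul (mul (c) (a)) (mul (b) (d)))) + ((mul (mul (b) (mul (c) (a))) (d)) - (mul (b) (mul (mul (c) (a)) (d))))) *~ (Posz 5) + (((mul (mul (mul (c) (a)) (b)) (d)) - (mul (mul (c) (a)) (mul (b) (d)))) + ((mul (mul (mul (c) (a)) (d)) (b)) - (mul (mul (c) (a)) (mul (d) (b))))) *~ (Negz 9) + ((mul (mul (mul (c) (a)) (b)) (d)) - (mul (mul (b) (mul (c) (a))) (d))) *~ (Posz 5) + (((mul (mul (a) (mul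 (b) (c))) (d)) - (mul (a) (mul (mul (b) (c)) (d)))) + ((mul (mul (mul (b) (c)) (a)) (d)) - (mul (mul (b) (c)) (mul (a) (d))))) *~ (Negz 6) + (((mul (mul (a) (mul (b) (c))) (d)) - (mul (a) (mul (mul (b) (c)) (d)))) + ((mul (mul (a) (d)) (mul (b) (c))) - (mul (a) (mul (d) (mul (b) (c)))))) *~ (Posz 7) + (((mul (mul (a) (mul (c) (b))) (d)) - (mul (a) (mul (mul (c) (b)) (d)))) + ((mul (mul (mul (c) (b)) (a)) (d)) - (mul (mul (c) (b)) (mul (a) (d))))) *~ (Posz 8) + (((mul (mul (a) (mul (c) (b))) (d)) - (mul (a) (mul (mul (c) (b)) (d)))) + ((mul (mul (a) (d)) (mul (c) (b))) - (mul (a) (mul (d) (mul (c) (b)))))) *~ (Negz 2) + ((mul (mul (a) (mul (c) (b))) (d)) - (mul (mul (mul (c) (b)) (a)) (d))) *~ (Negz 4) + (((mul (mul (mul (a) (d)) (b)) (c)) - (mul (mul (a) (d)) (mul (b) (c)))) + ((mul (mul (b) (mul (a) (d))) (c)) - (mul (b) (mul (mul (a) (d)) (c))))) *~ (Posz 5) + (((mul (mul (mul (a) (d)) (b)) (c)) - (mul (mul (a) (d)) (mul (b) (c)))) + ((mul (mul (mul (a) (d)) (c)) (b)) - (mul (mul (a) (d)) (mul (c) (b))))) *~ (Posz 1) + (((mul (mul (mul (d) (a)) (b)) (c)) - (mul (mul (d) (a)) (mul (b) (c)))) + ((mul (mul (b) (mul (d) (a))) (c)) - (mul (b) (mul (mul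 (d) (a)) (c))))) *~ (Posz 5) + (((mul (mul (mul (d) (a)) (b)) (c)) - (mul (mul (d) (a)) (mul (b) (c)))) + ((mul (mul (mul (d) (a)) (c)) (b)) - (mul (mul (d) (a)) (mul (c) (b))))) *~ (Negz 3) + ((mul (mul (mul (d) (a)) (b)) (c)) - (mul (mul (b) (mul (d) (a))) (c))) *~ (Negz 0) + (((mul (mul (a) (mul (b) (d))) (c)) - (mul (a) (mul (mul (b) (d)) (c)))) + ((mul (mul (mul (b) (d)) (a)) (c)) - (mul (mul (b) (d)) (mul (a) (c))))) *~ (Negz 0) + (((mul (mul (a) (mul (b) (d))) (c)) - (mul (a) (mul (mul (b) (d)) (c)))) + ((mul (mul (a) (c)) (mul (b) (d))) - (mul (a) (mul (c) (mul (b) (d)))))) *~ (Negz 4) + (((mul (mul (a) (mul (d) (b))) (c)) - (mul (a) (mul (mul (d) (b)) (c)))) + ((mul (mul (mul (d) (b)) (a)) (c)) - (mul (mul (d) (b)) (mul (a) (c))))) *~ (Posz 2) + (((mul (mul (a) (mul (d) (b))) (c)) - (mul (a) (mul (mul (d) (b)) (c)))) + ((mul (mul (a) (c)) (mul (d) (b))) - (mul (a) (mul (c) (mul (d) (b)))))) *~ (Negz 8) + ((mul (mul (a) (mul (d) (b))) (c)) - (mul (mul (mul (d) (b)) (a)) (c))) *~ (Posz 1) + (((mul (mul (a) (b)) (mul (c) (d))) - (mul (a) (mul (b) (mul (c) (d))))) + ((mul (mul (b) (a)) (mul (c) (d))) - (mul (b) (mul (a) (mul (c) (d)))))) *~ (Negz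 5) + (((mul (mul (a) (b)) (mul (c) (d))) - (mul (a) (mul (b) (mul (c) (d))))) + ((mul (mul (a) (mul (c) (d))) (b)) - (mul (a) (mul (mul (c) (d)) (b))))) *~ (Posz 6) + (((mul (mul (a) (b)) (mul (d) (c))) - (mul (a) (mul (b) (mul (d) (c))))) + ((mul (mul (a) (mul (d) (c))) (b)) - (mul (a) (mul (mul (d) (c)) (b))))) *~ (Posz 6) + ((mul (mul (mul (a) (c)) (d)) (b)) - (mul (mul (d) (mul (a) (c))) (b))) *~ (Negz 3) + ((mul (mul (mul (a) (d)) (c)) (b)) - (mul (mul (c) (mul (a) (d))) (b))) *~ (Negz 5) + (((mul (mul (a) (mul (c) (d))) (b)) - (mul (a) (mul (mul (c) (d)) (b)))) + ((mul (mul (mul (c) (d)) (a)) (b)) - (mul (mul (c) (d)) (mul (a) (b))))) *~ (Posz 3) + ((mul (mul (a) (mul (c) (d))) (b)) - (mul (mul (mul (c) (d)) (a)) (b))) *~ (Negz 1) + (((mul (mul (a) (mul (d) (c))) (b)) - (mul (a) (mul (mul (d) (c)) (b)))) + ((mul (mul (mul (d) (c)) (a)) (b)) - (mul (mul (d) (c)) (mul (a) (b))))) *~ (Negz 2) + ((mul (mul (a) (mul (d) (c))) (b)) - (mul (mul (mul (d) (c)) (a)) (b))) *~ (Posz 2) + ((mul (mul (a) (c)) (mul (b) (d))) - (mul (mul (c) (a)) (mul (b) (d)))) *~ (Posz 5) + ((mul (mul (a) (c)) (mul (d) (b))) - (mul (mul (c) (a)) (mul (d) (b)))) *~ (Posz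 10) + ((mul (mul (a) (d)) (mul (b) (c))) - (mul (mul (d) (a)) (mul (b) (c)))) *~ (Negz 0) + ((mul (mul (a) (d)) (mul (c) (b))) - (mul (mul (d) (a)) (mul (c) (b)))) *~ (Posz 4) + (((mul (mul (mul (b) (c)) (a)) (d)) - (mul (mul (b) (c)) (mul (a) (d)))) + ((mul (mul (mul (b) (c)) (d)) (a)) - (mul (mul (b) (c)) (mul (d) (a))))) *~ (Posz 7) + (((mul (mul (mul (c) (b)) (a)) (d)) - (mul (mul (c) (b)) (mul (a) (d)))) + ((mul (mul (mul (c) (b)) (d)) (a)) - (mul (mul (c) (b)) (mul (d) (a))))) *~ (Negz 12) + (((mul (mul (b) (mul (a) (c))) (d)) - (mul (b) (mul (mul (a) (c)) (d)))) + ((mul (mul (b) (d)) (mul (a) (c))) - (mul (b) (mul (d) (mul (a) (c)))))) *~ (Posz 1) + (((mul (mul (mul (b) (d)) (a)) (c)) - (mul (mul (b) (d)) (mul (a) (c)))) + ((mul (mul (mul (b) (d)) (c)) (a)) - (mul (mul (b) (d)) (mul (c) (a))))) *~ (Posz 1) + (((mul (mul (mul (d) (b)) (a)) (c)) - (mul (mul (d) (b)) (mul (a) (c)))) + ((mul (mul (mul (d) (b)) (c)) (a)) - (mul (mul (d) (b)) (mul (c) (a))))) *~ (Negz 0) + (((mul (mul (b) (mul (a) (d))) (c)) - (mul (b) (mul (mul (a) (d)) (c)))) + ((mul (mul (b) (c)) (mul (a) (d))) - (mul (b) (mul (c) (mul (a) (d)))))) *~ (Negz 4) + (((mul (mul (b)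 (mul (d) (a))) (c)) - (mul (b) (mul (mul (d) (a)) (c)))) + ((mul (mul (b) (c)) (mul (d) (a))) - (mul (b) (mul (c) (mul (d) (a)))))) *~ (Negz 5) + (((mul (mul (b) (a)) (mul (c) (d))) - (mul (b) (mul (a) (mul (c) (d))))) + ((mul (mul (b) (mul (c) (d))) (a)) - (mul (b) (mul (mul (c) (d)) (a))))) *~ (Posz 6) + (((mul (mul (mul (c) (d)) (a)) (b)) - (mul (mul (c) (d)) (mul (a) (b)))) + ((mul (mul (mul (c) (d)) (b)) (a)) - (mul (mul (c) (d)) (mul (b) (a))))) *~ (Negz 4) + (((mul (mul (mul (d) (c)) (a)) (b)) - (mul (mul (d) (c)) (mul (a) (b)))) + ((mul (mul (mul (d) (c)) (b)) (a)) - (mul (mul (d) (c)) (mul (b) (a))))) *~ (Posz 5) + ((mul (mul (mul (b) (c)) (d)) (a)) - (mul (mul (d) (mul (b) (c))) (a))) *~ (Negz 3) + ((mul (mul (mul (b) (d)) (c)) (a)) - (mul (mul (c) (mul (b) (d))) (a))) *~ (Negz 5) + ((mul (mul (mul (d) (b)) (c)) (a)) - (mul (mul (c) (mul (d) (b))) (a))) *~ (Negz 2) + ((mul (mul (b) (mul (c) (d))) (a)) - (mul (mul (mul (c) (d)) (b)) (a))) *~ (Negz 1) + ((mul (mul (b) (mul (d) (c))) (a)) - (mul (mul (mul (d) (c)) (b)) (a))) *~ (Posz 5) + ((mul (mul (b) (c)) (mul (a) (d))) - (mul (mul (c) (b)) (mul (a) (d)))) *~ (Posz 5) + ((mul (mul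 (b) (c)) (mul (d) (a))) - (mul (mul (c) (b)) (mul (d) (a)))) *~ (Posz 13) + ((mul (mul (b) (d)) (mul (a) (c))) - (mul (mul (d) (b)) (mul (a) (c)))) *~ (Negz 0) + ((mul (mul (b) (d)) (mul (c) (a))) - (mul (mul (d) (b)) (mul (c) (a)))) *~ (Posz 1) + ((mul (mul (c) (d)) (mul (a) (b))) - (mul (mul (d) (c)) (mul (a) (b)))) *~ (Negz 1) + ((mul (mul (c) (d)) (mul (b) (a))) - (mul (mul (d) (c)) (mul (b) (a)))) *~ (Negz 4) + (((mul (mul (mul (b) (c)) (d)) (a)) - (mul (mul (b) (mul (c) (d))) (a))) + ((mul (mul (mul (c) (b)) (d)) (a)) - (mul (mul (c) (mul (b) (d))) (a)))) *~ (Posz 3) + (((mul (a) (mul (mul (b) (c)) (d))) - (mul (a) (mul (b) (mul (c) (d))))) + ((mul (a) (mul (mul (c) (b)) (d))) - (mul (a) (mul (c) (mul (b) (d)))))) *~ (Negz 0) + (((mul (mul (mul (b) (c)) (d)) (a)) - (mul (mul (b) (mul (c) (d))) (a))) + ((mul (mul (mul (b) (d)) (c)) (a)) - (mul (mul (b) (mul (d) (c))) (a)))) *~ (Posz 1) + (((mul (a) (mul (mul (b) (c)) (d))) - (mul (a) (mul (b) (mul (c) (d))))) + ((mul (a) (mul (mul (b) (d)) (c))) - (mul (a) (mul (b) (mul (d) (c)))))) *~ (Posz 1) + ((mul (mul (mul (b) (c)) (d)) (a)) - (mul (mul (mul (c) (b)) (d)) (a))) *~ (Negz 6) + (((mul (mul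 (mul (b) (d)) (c)) (a)) - (mul (mul (b) (mul (d) (c))) (a))) + ((mul (mul (mul (d) (b)) (c)) (a)) - (mul (mul (d) (mul (b) (c))) (a)))) *~ (Posz 4) + (((mul (a) (mul (mul (b) (d)) (c))) - (mul (a) (mul (b) (mul (d) (c))))) + ((mul (a) (mul (mul (d) (b)) (c))) - (mul (a) (mul (d) (mul (b) (c)))))) *~ (Negz 6) + (((mul (mul (mul (c) (b)) (d)) (a)) - (mul (mul (c) (mul (b) (d))) (a))) + ((mul (mul (mul (c) (d)) (b)) (a)) - (mul (mul (c) (mul (d) (b))) (a)))) *~ (Posz 3) + (((mul (a) (mul (mul (c) (b)) (d))) - (mul (a) (mul (c) (mul (b) (d))))) + ((mul (a) (mul (mul (c) (d)) (b))) - (mul (a) (mul (c) (mul (d) (b)))))) *~ (Posz 6) + (((mul (a) (mul (mul (c) (d)) (b))) - (mul (a) (mul (c) (mul (d) (b))))) + ((mul (a) (mul (mul (d) (c)) (b))) - (mul (a) (mul (d) (mul (c) (b)))))) *~ (Posz 3) + (((mul (mul (mul (a) (c)) (d)) (b)) - (mul (mul (a) (mul (c) (d))) (b))) + ((mul (mul (mul (c) (a)) (d)) (b)) - (mul (mul (c) (mul (a) (d))) (b)))) *~ (Posz 6) + (((mul (b) (mul (mul (a) (c)) (d))) - (mul (b) (mul (a) (mul (c) (d))))) + ((mul (b) (mul (mul (c) (a)) (d))) - (mul (b) (mul (c) (mul (a) (d)))))) *~ (Negz 0) + (((mul (mul (mul (a) (c)) (d)) (b)) - (mul (mul (a) (mul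 (c) (d))) (b))) + ((mul (mul (mul (a) (d)) (c)) (b)) - (mul (mul (a) (mul (d) (c))) (b)))) *~ (Posz 1) + (((mul (b) (mul (mul (a) (c)) (d))) - (mul (b) (mul (a) (mul (c) (d))))) + ((mul (b) (mul (mul (a) (d)) (c))) - (mul (b) (mul (a) (mul (d) (c)))))) *~ (Posz 1) + ((mul (mul (mul (a) (c)) (d)) (b)) - (mul (mul (mul (c) (a)) (d)) (b))) *~ (Negz 3) + (((mul (mul (mul (a) (d)) (c)) (b)) - (mul (mul (a) (mul (d) (c))) (b))) + ((mul (mul (mul (d) (a)) (c)) (b)) - (mul (mul (d) (mul (a) (c))) (b)))) *~ (Posz 4) + (((mul (b) (mul (mul (a) (d)) (c))) - (mul (b) (mul (a) (mul (d) (c))))) + ((mul (b) (mul (mul (d) (a)) (c))) - (mul (b) (mul (d) (mul (a) (c)))))) *~ (Negz 0) + (((mul (b) (mul (mul (c) (a)) (d))) - (mul (b) (mul (c) (mul (a) (d))))) + ((mul (b) (mul (mul (c) (d)) (a))) - (mul (b) (mul (c) (mul (d) (a)))))) *~ (Posz 6) + (((mul (mul (mul (a) (b)) (d)) (c)) - (mul (mul (a) (mul (b) (d))) (c))) + ((mul (mul (mul (a) (d)) (b)) (c)) - (mul (mul (a) (mul (d) (b))) (c)))) *~ (Negz 5).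
  by lin_solve.
apply: (lin_cancel (D:=6)) => //.
rewrite E ?(F2 (mul (a) (b)) (c) (d)) ?(F1 (mul (a) (c)) (b) (d)) ?(F2 (mul (a) (c)) (b) (d)) ?(F1 (mul (c) (a)) (b) (d)) ?(F2 (mul (c) (a)) (b) (d)) ?(F3 (mul (c) (a)) (b) (d)) ?(F1 (a) (mul (b) (c)) (d)) ?(F2 (a) (mul (b) (c)) (d)) ?(F1 (a) (mul (c) (b)) (d)) ?(F2 (a) (mul (c) (b)) (d)) ?(F3 (a) (mul (c) (b)) (d)) ?(F1 (mul (a) (d)) (b) (c)) ?(F2 (mul (a) (d)) (b) (c)) ?(F1 (mul (d) (a)) (b) (c)) ?(F2 (mul (d) (a)) (b) (c)) ?(F3 (mul (d) (a)) (b) (c)) ?(F1 (a) (mul (b) (d)) (c)) ?(F2 (a) (mul (b) (d)) (c)) ?(F1 (a) (mul (d) (b)) (c)) ?(F2 (a) (mul (d) (b)) (c)) ?(F3 (a) (mul (d) (b)) (c)) ?(F1 (a) (b) (mul (c) (d))) ?(F2 (a) (b) (mul (c) (d))) ?(F2 (a) (b) (mul (d) (c))) ?(F3 (mul (a) (c)) (d) (b)) ?(F3 (mul (a) (d)) (c) (b)) ?(F1 (a) (mul (c) (d)) (b)) ?(F3 (a) (mul (c) (d)) (b)) ?(F1 (a) (mul (d) (c)) (b)) ?(F3 (a) (mul (d) (c)) (b)) ?(F3 (a) (c) (mul (b) (d))) ?(F3 (a) (c) (mul (d) (b))) ?(F3 (a) (d) (mul (b) (c))) ?(F3 (a) (d)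 (mul (c) (b))) ?(F2 (mul (b) (c)) (a) (d)) ?(F2 (mul (c) (b)) (a) (d)) ?(F2 (b) (mul (a) (c)) (d)) ?(F2 (mul (b) (d)) (a) (c)) ?(F2 (mul (d) (b)) (a) (c)) ?(F2 (b) (mul (a) (d)) (c)) ?(F2 (b) (mul (d) (a)) (c)) ?(F2 (b) (a) (mul (c) (d))) ?(F2 (mul (c) (d)) (a) (b)) ?(F2 (mul (d) (c)) (a) (b)) ?(F3 (mul (b) (c)) (d) (a)) ?(F3 (mul (b) (d)) (c) (a)) ?(F3 (mul (d) (b)) (c) (a)) ?(F3 (b) (mul (c) (d)) (a)) ?(F3 (b) (mul (d) (c)) (a)) ?(F3 (b) (c) (mul (a) (d))) ?(F3 (b) (c) (mul (d) (a))) ?(F3 (b) (d) (mul (a) (c))) ?(F3 (b) (d) (mul (c) (a))) ?(F3 (c) (d) (mul (a) (b))) ?(F3 (c) (d) (mul (b) (a))) ?(F1r (b) (c) (d) (a)) ?(F1l (b) (c) (d) (a)) ?(F2r (b) (c) (d) (a)) ?(F2l (b) (c) (d) (a)) ?(F3r (b) (c) (d) (a)) ?(F1r (b) (d) (c) (a)) ?(F1l (b) (d) (c) (a)) ?(F2r (c) (b) (d) (a)) ?(F2l (c) (b) (d) (a)) ?(F1l (c) (d) (b) (a)) ?(F1r (a) (c) (d) (b)) ?(F1l (a) (c) (d) (b)) ?(F2r (a) (c) (d) (b)) ?(F2l (a) (c) (d) (b)) ?(F3r (a) (c) (d) (b)) ?(F1r (a) (d) (c) (b)) ?(F1l (a)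 (d) (c) (b)) ?(F2l (c) (a) (d) (b)) ?(F2r (a) (b) (d) (c)) ?mul0rz ?addr0 ?add0r //.
Qed.

Lemma K4b (a b c d : A) : mul (mul (c) (mul (a) (b))) (d) = mul (c) (mul (mul (a) (b)) (d)).
Proof.
have E : ((mul (mul (c) (mul (a) (b))) (d)) - (mul (c) (mul (mul (a) (b)) (d)))) *+ 6 = (((mul (mul (mul (a) (b)) (c)) (d)) - (mul (mul (a) (b)) (mul (c) (d)))) + ((mul (mul (c) (mul (a) (b))) (d)) - (mul (c) (mul (mul (a) (b)) (d))))) *~ (Posz 6) + (((mul (mul (mul (a) (b)) (c)) (d)) - (mul (mul (a) (b)) (mul (c) (d)))) + ((mul (mul (mul (a) (b)) (d)) (c)) - (mul (mul (a) (b)) (mul (d) (c))))) *~ (Negz 5) + (((mul (mul (mul (a) (c)) (b)) (d)) - (mul (mul (a) (c)) (mul (b) (d)))) + ((mul (mul (b) (mul (a) (c))) (d)) - (mul (b) (mul (mul (a) (c)) (d))))) *~ (Posz 1) + (((mul (mul (mul (a) (c)) (b)) (d)) - (mul (mul (a) (c)) (mul (b) (d)))) + ((mul (mul (mul (a) (c)) (d)) (b)) - (mul (mul (a) (c)) (mul (d) (b))))) *~ (Negz 0) + (((mul (mul (mul (c) (a)) (b)) (d)) - (mul (mul (c) (a)) (mul (b) (d)))) + ((mul (mul (b) (mul (c) (a))) (d)) - (mul (b) (mul (mul (c) (a)) (d))))) *~ (Negz 4) + (((mul (mul (mul (c) (a)) (b)) (d)) - (mul (mul (c) (a)) (mul (b)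 (d)))) + ((mul (mul (mul (c) (a)) (d)) (b)) - (mul (mul (c) (a)) (mul (d) (b))))) *~ (Posz 10) + ((mul (mul (mul (c) (a)) (b)) (d)) - (mul (mul (b) (mul (c) (a))) (d))) *~ (Negz 4) + (((mul (mul (a) (mul (b) (c))) (d)) - (mul (a) (mul (mul (b) (c)) (d)))) + ((mul (mul (mul (b) (c)) (a)) (d)) - (mul (mul (b) (c)) (mul (a) (d))))) *~ (Posz 7) + (((mul (mul (a) (mul (b) (c))) (d)) - (mul (a) (mul (mul (b) (c)) (d)))) + ((mul (mul (a) (d)) (mul (b) (c))) - (mul (a) (mul (d) (mul (b) (c)))))) *~ (Negz 6) + (((mul (mul (a) (mul (c) (b))) (d)) - (mul (a) (mul (mul (c) (b)) (d)))) + ((mul (mul (mul (c) (b)) (a)) (d)) - (mul (mul (c) (b)) (mul (a) (d))))) *~ (Negz 7) + (((mul (mul (a) (mul (c) (b))) (d)) - (mul (a) (mul (mul (c) (b)) (d)))) + ((mul (mul (a) (d)) (mul (c) (b))) - (mul (a) (mul (d) (mul (c) (b)))))) *~ (Posz 3) + ((mul (mul (a) (mul (c) (b))) (d)) - (mul (mul (mul (c) (b)) (a)) (d))) *~ (Posz 5) + (((mul (mul (mul (a) (d)) (b)) (c)) - (mul (mul (a) (d)) (mul (b) (c)))) + ((mul (mul (b) (mul (a) (d))) (c)) - (mul (b) (mul (mul (a) (d)) (c))))) *~ (Negz 4) + (((mul (mul (mul (a) (d)) (b)) (c)) - (mul (mul (a) (d)) (mul (b) (c)))) + ((mul (mul (mul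 (a) (d)) (c)) (b)) - (mul (mul (a) (d)) (mul (c) (b))))) *~ (Negz 0) + (((mul (mul (mul (d) (a)) (b)) (c)) - (mul (mul (d) (a)) (mul (b) (c)))) + ((mul (mul (b) (mul (d) (a))) (c)) - (mul (b) (mul (mul (d) (a)) (c))))) *~ (Negz 4) + (((mul (mul (mul (d) (a)) (b)) (c)) - (mul (mul (d) (a)) (mul (b) (c)))) + ((mul (mul (mul (d) (a)) (c)) (b)) - (mul (mul (d) (a)) (mul (c) (b))))) *~ (Posz 4) + ((mul (mul (mul (d) (a)) (b)) (c)) - (mul (mul (b) (mul (d) (a))) (c))) *~ (Posz 1) + (((mul (mul (a) (mul (b) (d))) (c)) - (mul (a) (mul (mul (b) (d)) (c)))) + ((mul (mul (mul (b) (d)) (a)) (c)) - (mul (mul (b) (d)) (mul (a) (c))))) *~ (Posz 1) + (((mul (mul (a) (mul (b) (d))) (c)) - (mul (a) (mul (mul (b) (d)) (c)))) + ((mul (mul (a) (c)) (mul (b) (d))) - (mul (a) (mul (c) (mul (b) (d)))))) *~ (Posz 5) + (((mul (mul (a) (mul (d) (b))) (c)) - (mul (a) (mul (mul (d) (b)) (c)))) + ((mul (mul (mul (d) (b)) (a)) (c)) - (mul (mul (d) (b)) (mul (a) (c))))) *~ (Negz 1) + (((mul (mul (a) (mul (d) (b))) (c)) - (mul (a) (mul (mul (d) (b)) (c)))) + ((mul (mul (a) (c)) (mul (d) (b))) - (mul (a) (mul (c) (mul (d) (b)))))) *~ (Posz 9) + ((mul (mul (a) (mul (d) (b))) (c))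 - (mul (mul (mul (d) (b)) (a)) (c))) *~ (Negz 0) + (((mul (mul (a) (b)) (mul (c) (d))) - (mul (a) (mul (b) (mul (c) (d))))) + ((mul (mul (b) (a)) (mul (c) (d))) - (mul (b) (mul (a) (mul (c) (d)))))) *~ (Posz 6) + (((mul (mul (a) (b)) (mul (c) (d))) - (mul (a) (mul (b) (mul (c) (d))))) + ((mul (mul (a) (mul (c) (d))) (b)) - (mul (a) (mul (mul (c) (d)) (b))))) *~ (Negz 5) + (((mul (mul (a) (b)) (mul (d) (c))) - (mul (a) (mul (b) (mul (d) (c))))) + ((mul (mul (a) (mul (d) (c))) (b)) - (mul (a) (mul (mul (d) (c)) (b))))) *~ (Negz 5) + ((mul (mul (mul (a) (c)) (d)) (b)) - (mul (mul (d) (mul (a) (c))) (b))) *~ (Posz 4) + ((mul (mul (mul (a) (d)) (c)) (b)) - (mul (mul (c) (mul (a) (d))) (b))) *~ (Posz 6) + (((mul (mul (a) (mul (c) (d))) (b)) - (mul (a) (mul (mul (c) (d)) (b)))) + ((mul (mul (mul (c) (d)) (a)) (b)) - (mul (mul (c) (d)) (mul (a) (b))))) *~ (Negz 2) + ((mul (mul (a) (mul (c) (d))) (b)) - (mul (mul (mul (c) (d)) (a)) (b))) *~ (Posz 2) + (((mul (mul (a) (mul (d) (c))) (b)) - (mul (a) (mul (mul (d) (c)) (b)))) + ((mul (mul (mul (d) (c)) (a)) (b)) - (mul (mul (d) (c)) (mul (a) (b))))) *~ (Posz 3) + ((mul (mul (a) (mul (d) (c))) (b)) - (mul (mul (mul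 (d) (c)) (a)) (b))) *~ (Negz 1) + ((mul (mul (a) (c)) (mul (b) (d))) - (mul (mul (c) (a)) (mul (b) (d)))) *~ (Negz 4) + ((mul (mul (a) (c)) (mul (d) (b))) - (mul (mul (c) (a)) (mul (d) (b)))) *~ (Negz 9) + ((mul (mul (a) (d)) (mul (b) (c))) - (mul (mul (d) (a)) (mul (b) (c)))) *~ (Posz 1) + ((mul (mul (a) (d)) (mul (c) (b))) - (mul (mul (d) (a)) (mul (c) (b)))) *~ (Negz 3) + (((mul (mul (mul (b) (c)) (a)) (d)) - (mul (mul (b) (c)) (mul (a) (d)))) + ((mul (mul (mul (b) (c)) (d)) (a)) - (mul (mul (b) (c)) (mul (d) (a))))) *~ (Negz 6) + (((mul (mul (mul (c) (b)) (a)) (d)) - (mul (mul (c) (b)) (mul (a) (d)))) + ((mul (mul (mul (c) (b)) (d)) (a)) - (mul (mul (c) (b)) (mul (d) (a))))) *~ (Posz 13) + (((mul (mul (b) (mul (a) (c))) (d)) - (mul (b) (mul (mul (a) (c)) (d)))) + ((mul (mul (b) (d)) (mul (a) (c))) - (mul (b) (mul (d) (mul (a) (c)))))) *~ (Negz 0) + (((mul (mul (mul (b) (d)) (a)) (c)) - (mul (mul (b) (d)) (mul (a) (c)))) + ((mul (mul (mul (b) (d)) (c)) (a)) - (mul (mul (b) (d)) (mul (c) (a))))) *~ (Negz 0) + (((mul (mul (mul (d) (b)) (a)) (c)) - (mul (mul (d) (b)) (mul (a) (c)))) + ((mul (mul (mul (d) (b)) (c)) (a)) - (mul (mul (d) (b))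 (mul (c) (a))))) *~ (Posz 1) + (((mul (mul (b) (mul (a) (d))) (c)) - (mul (b) (mul (mul (a) (d)) (c)))) + ((mul (mul (b) (c)) (mul (a) (d))) - (mul (b) (mul (c) (mul (a) (d)))))) *~ (Posz 5) + (((mul (mul (b) (mul (d) (a))) (c)) - (mul (b) (mul (mul (d) (a)) (c)))) + ((mul (mul (b) (c)) (mul (d) (a))) - (mul (b) (mul (c) (mul (d) (a)))))) *~ (Posz 6) + (((mul (mul (b) (a)) (mul (c) (d))) - (mul (b) (mul (a) (mul (c) (d))))) + ((mul (mul (b) (mul (c) (d))) (a)) - (mul (b) (mul (mul (c) (d)) (a))))) *~ (Negz 5) + (((mul (mul (mul (c) (d)) (a)) (b)) - (mul (mul (c) (d)) (mul (a) (b)))) + ((mul (mul (mul (c) (d)) (b)) (a)) - (mul (mul (c) (d)) (mul (b) (a))))) *~ (Posz 5) + (((mul (mul (mul (d) (c)) (a)) (b)) - (mul (mul (d) (c)) (mul (a) (b)))) + ((mul (mul (mul (d) (c)) (b)) (a)) - (mul (mul (d) (c)) (mul (b) (a))))) *~ (Negz 4) + ((mul (mul (mul (b) (c)) (d)) (a)) - (mul (mul (d) (mul (b) (c))) (a))) *~ (Posz 4) + ((mul (mul (mul (b) (d)) (c)) (a)) - (mul (mul (c) (mul (b) (d))) (a))) *~ (Posz 6) + ((mul (mul (mul (d) (b)) (c)) (a)) - (mul (mul (c) (mul (d) (b))) (a))) *~ (Posz 3) + ((mul (mul (b) (mul (c) (d))) (a)) - (mul (mul (mul (c) (d)) (b))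 (a))) *~ (Posz 2) + ((mul (mul (b) (mul (d) (c))) (a)) - (mul (mul (mul (d) (c)) (b)) (a))) *~ (Negz 4) + ((mul (mul (b) (c)) (mul (a) (d))) - (mul (mul (c) (b)) (mul (a) (d)))) *~ (Negz 4) + ((mul (mul (b) (c)) (mul (d) (a))) - (mul (mul (c) (b)) (mul (d) (a)))) *~ (Negz 12) + ((mul (mul (b) (d)) (mul (a) (c))) - (mul (mul (d) (b)) (mul (a) (c)))) *~ (Posz 1) + ((mul (mul (b) (d)) (mul (c) (a))) - (mul (mul (d) (b)) (mul (c) (a)))) *~ (Negz 0) + ((mul (mul (c) (d)) (mul (a) (b))) - (mul (mul (d) (c)) (mul (a) (b)))) *~ (Posz 2) + ((mul (mul (c) (d)) (mul (b) (a))) - (mul (mul (d) (c)) (mul (b) (a)))) *~ (Posz 5) + (((mul (mul (mul (b) (c)) (d)) (a)) - (mul (mul (b) (mul (c) (d))) (a))) + ((mul (mul (mul (c) (b)) (d)) (a)) - (mul (mul (c) (mul (b) (d))) (a)))) *~ (Negz 2) + (((mul (a) (mul (mul (b) (c)) (d))) - (mul (a) (mul (b) (mul (c) (d))))) + ((mul (a) (mul (mul (c) (b)) (d))) - (mul (a) (mul (c) (mul (b) (d)))))) *~ (Posz 1) + (((mul (mul (mul (b) (c)) (d)) (a)) - (mul (mul (b) (mul (c) (d))) (a))) + ((mul (mul (mul (b) (d)) (c)) (a)) - (mul (mul (b) (mul (d) (c))) (a)))) *~ (Negz 0) + (((mul (a) (mul (mul (b) (c)) (d))) - (mul (a) (mul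 (b) (mul (c) (d))))) + ((mul (a) (mul (mul (b) (d)) (c))) - (mul (a) (mul (b) (mul (d) (c)))))) *~ (Negz 0) + ((mul (mul (mul (b) (c)) (d)) (a)) - (mul (mul (mul (c) (b)) (d)) (a))) *~ (Posz 7) + (((mul (mul (mul (b) (d)) (c)) (a)) - (mul (mul (b) (mul (d) (c))) (a))) + ((mul (mul (mul (d) (b)) (c)) (a)) - (mul (mul (d) (mul (b) (c))) (a)))) *~ (Negz 3) + (((mul (a) (mul (mul (b) (d)) (c))) - (mul (a) (mul (b) (mul (d) (c))))) + ((mul (a) (mul (mul (d) (b)) (c))) - (mul (a) (mul (d) (mul (b) (c)))))) *~ (Posz 7) + (((mul (mul (mul (c) (b)) (d)) (a)) - (mul (mul (c) (mul (b) (d))) (a))) + ((mul (mul (mul (c) (d)) (b)) (a)) - (mul (mul (c) (mul (d) (b))) (a)))) *~ (Negz 2) + (((mul (a) (mul (mul (c) (b)) (d))) - (mul (a) (mul (c) (mul (b) (d))))) + ((mul (a) (mul (mul (c) (d)) (b))) - (mul (a) (mul (c) (mul (d) (b)))))) *~ (Negz 5) + (((mul (a) (mul (mul (c) (d)) (b))) - (mul (a) (mul (c) (mul (d) (b))))) + ((mul (a) (mul (mul (d) (c)) (b))) - (mul (a) (mul (d) (mul (c) (b)))))) *~ (Negz 2) + (((mul (mul (mul (a) (c)) (d)) (b)) - (mul (mul (a) (mul (c) (d))) (b))) + ((mul (mul (mul (c) (a)) (d)) (b)) - (mul (mul (c) (mul (a) (d))) (b)))) *~ (Negz 5) + (((mul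 (b) (mul (mul (a) (c)) (d))) - (mul (b) (mul (a) (mul (c) (d))))) + ((mul (b) (mul (mul (c) (a)) (d))) - (mul (b) (mul (c) (mul (a) (d)))))) *~ (Posz 1) + (((mul (mul (mul (a) (c)) (d)) (b)) - (mul (mul (a) (mul (c) (d))) (b))) + ((mul (mul (mul (a) (d)) (c)) (b)) - (mul (mul (a) (mul (d) (c))) (b)))) *~ (Negz 0) + (((mul (b) (mul (mul (a) (c)) (d))) - (mul (b) (mul (a) (mul (c) (d))))) + ((mul (b) (mul (mul (a) (d)) (c))) - (mul (b) (mul (a) (mul (d) (c)))))) *~ (Negz 0) + ((mul (mul (mul (a) (c)) (d)) (b)) - (mul (mul (mul (c) (a)) (d)) (b))) *~ (Posz 4) + (((mul (mul (mul (a) (d)) (c)) (b)) - (mul (mul (a) (mul (d) (c))) (b))) + ((mul (mul (mul (d) (a)) (c)) (b)) - (mul (mul (d) (mul (a) (c))) (b)))) *~ (Negz 3) + (((mul (b) (mul (mul (a) (d)) (c))) - (mul (b) (mul (a) (mul (d) (c))))) + ((mul (b) (mul (mul (d) (a)) (c))) - (mul (b) (mul (d) (mul (a) (c)))))) *~ (Posz 1) + (((mul (b) (mul (mul (c) (a)) (d))) - (mul (b) (mul (c) (mul (a) (d))))) + ((mul (b) (mul (mul (c) (d)) (a))) - (mul (b) (mul (c) (mul (d) (a)))))) *~ (Negz 5) + (((mul (mul (mul (a) (b)) (d)) (c)) - (mul (mul (a) (mul (b) (d))) (c))) + ((mul (mul (mul (a) (d)) (b)) (c)) - (mul (mul (a)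 (mul (d) (b))) (c)))) *~ (Posz 6).
  by lin_solve.
apply: (lin_cancel (D:=6)) => //.
rewrite E ?(F1 (mul (a) (b)) (c) (d)) ?(F2 (mul (a) (b)) (c) (d)) ?(F1 (mul (a) (c)) (b) (d)) ?(F2 (mul (a) (c)) (b) (d)) ?(F1 (mul (c) (a)) (b) (d)) ?(F2 (mul (c) (a)) (b) (d)) ?(F3 (mul (c) (a)) (b) (d)) ?(F1 (a) (mul (b) (c)) (d)) ?(F2 (a) (mul (b) (c)) (d)) ?(F1 (a) (mul (c) (b)) (d)) ?(F2 (a) (mul (c) (b)) (d)) ?(F3 (a) (mul (c) (b)) (d)) ?(F1 (mul (a) (d)) (b) (c)) ?(F2 (mul (a) (d)) (b) (c)) ?(F1 (mul (d) (a)) (b) (c)) ?(F2 (mul (d) (a)) (b) (c)) ?(F3 (mul (d) (a)) (b) (c)) ?(F1 (a) (mul (b) (d)) (c)) ?(F2 (a) (mul (b) (d)) (c)) ?(F1 (a) (mul (d) (b)) (c)) ?(F2 (a) (mul (d) (b)) (c)) ?(F3 (a) (mul (d) (b)) (c)) ?(F1 (a) (b) (mul (c) (d))) ?(F2 (a) (b) (mul (c) (d))) ?(F2 (a) (b) (mul (d) (c))) ?(F3 (mul (a) (c)) (d) (b)) ?(F3 (mul (a) (d)) (c) (b)) ?(F1 (a) (mul (c) (d)) (b)) ?(F3 (a) (mul (c) (d)) (b)) ?(F1 (a) (mul (d) (c)) (b)) ?(F3 (a) (mul (d) (c)) (b)) ?(F3 (a) (c) (mul (b) (d))) ?(F3 (a)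 (c) (mul (d) (b))) ?(F3 (a) (d) (mul (b) (c))) ?(F3 (a) (d) (mul (c) (b))) ?(F2 (mul (b) (c)) (a) (d)) ?(F2 (mul (c) (b)) (a) (d)) ?(F2 (b) (mul (a) (c)) (d)) ?(F2 (mul (b) (d)) (a) (c)) ?(F2 (mul (d) (b)) (a) (c)) ?(F2 (b) (mul (a) (d)) (c)) ?(F2 (b) (mul (d) (a)) (c)) ?(F2 (b) (a) (mul (c) (d))) ?(F2 (mul (c) (d)) (a) (b)) ?(F2 (mul (d) (c)) (a) (b)) ?(F3 (mul (b) (c)) (d) (a)) ?(F3 (mul (b) (d)) (c) (a)) ?(F3 (mul (d) (b)) (c) (a)) ?(F3 (b) (mul (c) (d)) (a)) ?(F3 (b) (mul (d) (c)) (a)) ?(F3 (b) (c) (mul (a) (d))) ?(F3 (b) (c) (mul (d) (a))) ?(F3 (b) (d) (mul (a) (c))) ?(F3 (b) (d) (mul (c) (a))) ?(F3 (c) (d) (mul (a) (b))) ?(F3 (c) (d) (mul (b) (a))) ?(F1r (b) (c) (d) (a)) ?(F1l (b) (c) (d) (a)) ?(F2r (b) (c) (d) (a)) ?(F2l (b) (c) (d) (a)) ?(F3r (b) (c) (d) (a)) ?(F1r (b) (d) (c) (a)) ?(F1l (b) (d) (c) (a)) ?(F2r (c) (b) (d) (a)) ?(F2l (c) (b) (d) (a)) ?(F1l (c) (d) (b) (a)) ?(F1r (a) (c) (d) (b)) ?(F1l (a) (c) (d) (b)) ?(F2r (a) (c) (d) (b)) ?(F2l (a) (c) (d) (b)) ?(F3r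 (a) (c) (d) (b)) ?(F1r (a) (d) (c) (b)) ?(F1l (a) (d) (c) (b)) ?(F2l (c) (a) (d) (b)) ?(F2r (a) (b) (d) (c)) ?mul0rz ?addr0 ?add0r //.
Qed.

Lemma K4c (a b c d : A) : mul (mul (c) (d)) (mul (a) (b)) = mul (c) (mul (d) (mul (a) (b))).
Proof.
have E : ((mul (mul (c) (d)) (mul (a) (b))) - (mul (c) (mul (d) (mul (a) (b))))) *+ 6 = (((mul (mul (mul (a) (b)) (c)) (d)) - (mul (mul (a) (b)) (mul (c) (d)))) + ((mul (mul (c) (mul (a) (b))) (d)) - (mul (c) (mul (mul (a) (b)) (d))))) *~ (Negz 5) + (((mul (mul (mul (a) (b)) (c)) (d)) - (mul (mul (a) (b)) (mul (c) (d)))) + ((mul (mul (mul (a) (b)) (d)) (c)) - (mul (mul (a) (b)) (mul (d) (c))))) *~ (Posz 6) + (((mul (mul (mul (a) (c)) (b)) (d)) - (mul (mul (a) (c)) (mul (b) (d)))) + ((mul (mul (b) (mul (a) (c))) (d)) - (mul (b) (mul (mul (a) (c)) (d))))) *~ (Negz 0) + (((mul (mul (mul (a) (c)) (b)) (d)) - (mul (mul (a) (c)) (mul (b) (d)))) + ((mul (mul (mul (a) (c)) (d)) (b)) - (mul (mul (a) (c)) (mul (d) (b))))) *~ (Posz 1) + (((mul (mul (mul (c) (a)) (b)) (d)) - (mul (mul (c) (a)) (mul (b) (d)))) + ((mul (mul (b) (mul (c) (a))) (d)) - (mul (b) (mul (mul (c) (a)) (d))))) *~ (Posz 5) + (((mul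 (mul (mul (c) (a)) (b)) (d)) - (mul (mul (c) (a)) (mul (b) (d)))) + ((mul (mul (mul (c) (a)) (d)) (b)) - (mul (mul (c) (a)) (mul (d) (b))))) *~ (Negz 9) + ((mul (mul (mul (c) (a)) (b)) (d)) - (mul (mul (b) (mul (c) (a))) (d))) *~ (Posz 5) + (((mul (mul (a) (mul (b) (c))) (d)) - (mul (a) (mul (mul (b) (c)) (d)))) + ((mul (mul (mul (b) (c)) (a)) (d)) - (mul (mul (b) (c)) (mul (a) (d))))) *~ (Negz 6) + (((mul (mul (a) (mul (b) (c))) (d)) - (mul (a) (mul (mul (b) (c)) (d)))) + ((mul (mul (a) (d)) (mul (b) (c))) - (mul (a) (mul (d) (mul (b) (c)))))) *~ (Posz 7) + (((mul (mul (a) (mul (c) (b))) (d)) - (mul (a) (mul (mul (c) (b)) (d)))) + ((mul (mul (mul (c) (b)) (a)) (d)) - (mul (mul (c) (b)) (mul (a) (d))))) *~ (Posz 8) + (((mul (mul (a) (mul (c) (b))) (d)) - (mul (a) (mul (mul (c) (b)) (d)))) + ((mul (mul (a) (d)) (mul (c) (b))) - (mul (a) (mul (d) (mul (c) (b)))))) *~ (Negz 2) + ((mul (mul (a) (mul (c) (b))) (d)) - (mul (mul (mul (c) (b)) (a)) (d))) *~ (Negz 4) + (((mul (mul (mul (a) (d)) (b)) (c)) - (mul (mul (a) (d)) (mul (b) (c)))) + ((mul (mul (b) (mul (a) (d))) (c)) - (mul (b) (mul (mul (a) (d)) (c))))) *~ (Posz 5) + (((mul (mul (mul (a) (d)) (b))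 (c)) - (mul (mul (a) (d)) (mul (b) (c)))) + ((mul (mul (mul (a) (d)) (c)) (b)) - (mul (mul (a) (d)) (mul (c) (b))))) *~ (Posz 1) + (((mul (mul (mul (d) (a)) (b)) (c)) - (mul (mul (d) (a)) (mul (b) (c)))) + ((mul (mul (b) (mul (d) (a))) (c)) - (mul (b) (mul (mul (d) (a)) (c))))) *~ (Posz 5) + (((mul (mul (mul (d) (a)) (b)) (c)) - (mul (mul (d) (a)) (mul (b) (c)))) + ((mul (mul (mul (d) (a)) (c)) (b)) - (mul (mul (d) (a)) (mul (c) (b))))) *~ (Negz 3) + ((mul (mul (mul (d) (a)) (b)) (c)) - (mul (mul (b) (mul (d) (a))) (c))) *~ (Negz 0) + (((mul (mul (a) (mul (b) (d))) (c)) - (mul (a) (mul (mul (b) (d)) (c)))) + ((mul (mul (mul (b) (d)) (a)) (c)) - (mul (mul (b) (d)) (mul (a) (c))))) *~ (Negz 0) + (((mul (mul (a) (mul (b) (d))) (c)) - (mul (a) (mul (mul (b) (d)) (c)))) + ((mul (mul (a) (c)) (mul (b) (d))) - (mul (a) (mul (c) (mul (b) (d)))))) *~ (Negz 4) + (((mul (mul (a) (mul (d) (b))) (c)) - (mul (a) (mul (mul (d) (b)) (c)))) + ((mul (mul (mul (d) (b)) (a)) (c)) - (mul (mul (d) (b)) (mul (a) (c))))) *~ (Posz 2) + (((mul (mul (a) (mul (d) (b))) (c)) - (mul (a) (mul (mul (d) (b)) (c)))) + ((mul (mul (a) (c)) (mul (d) (b))) - (mul (a) (mul (c) (mul (d)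 (b)))))) *~ (Negz 8) + ((mul (mul (a) (mul (d) (b))) (c)) - (mul (mul (mul (d) (b)) (a)) (c))) *~ (Posz 1) + (((mul (mul (a) (b)) (mul (c) (d))) - (mul (a) (mul (b) (mul (c) (d))))) + ((mul (mul (b) (a)) (mul (c) (d))) - (mul (b) (mul (a) (mul (c) (d)))))) *~ (Negz 5) + (((mul (mul (a) (b)) (mul (c) (d))) - (mul (a) (mul (b) (mul (c) (d))))) + ((mul (mul (a) (mul (c) (d))) (b)) - (mul (a) (mul (mul (c) (d)) (b))))) *~ (Posz 6) + (((mul (mul (a) (b)) (mul (d) (c))) - (mul (a) (mul (b) (mul (d) (c))))) + ((mul (mul (a) (mul (d) (c))) (b)) - (mul (a) (mul (mul (d) (c)) (b))))) *~ (Posz 6) + ((mul (mul (mul (a) (c)) (d)) (b)) - (mul (mul (d) (mul (a) (c))) (b))) *~ (Negz 3) + ((mul (mul (mul (a) (d)) (c)) (b)) - (mul (mul (c) (mul (a) (d))) (b))) *~ (Negz 5) + (((mul (mul (a) (mul (c) (d))) (b)) - (mul (a) (mul (mul (c) (d)) (b)))) + ((mul (mul (mul (c) (d)) (a)) (b)) - (mul (mul (c) (d)) (mul (a) (b))))) *~ (Posz 3) + ((mul (mul (a) (mul (c) (d))) (b)) - (mul (mul (mul (c) (d)) (a)) (b))) *~ (Negz 1) + (((mul (mul (a) (mul (d) (c))) (b)) - (mul (a) (mul (mul (d) (c)) (b)))) + ((mul (mul (mul (d) (c)) (a)) (b)) - (mul (mul (d) (c)) (mul (a) (b))))) *~ (Negz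 2) + ((mul (mul (a) (mul (d) (c))) (b)) - (mul (mul (mul (d) (c)) (a)) (b))) *~ (Posz 2) + ((mul (mul (a) (c)) (mul (b) (d))) - (mul (mul (c) (a)) (mul (b) (d)))) *~ (Posz 5) + ((mul (mul (a) (c)) (mul (d) (b))) - (mul (mul (c) (a)) (mul (d) (b)))) *~ (Posz 10) + ((mul (mul (a) (d)) (mul (b) (c))) - (mul (mul (d) (a)) (mul (b) (c)))) *~ (Negz 0) + ((mul (mul (a) (d)) (mul (c) (b))) - (mul (mul (d) (a)) (mul (c) (b)))) *~ (Posz 4) + (((mul (mul (mul (b) (c)) (a)) (d)) - (mul (mul (b) (c)) (mul (a) (d)))) + ((mul (mul (mul (b) (c)) (d)) (a)) - (mul (mul (b) (c)) (mul (d) (a))))) *~ (Posz 7) + (((mul (mul (mul (c) (b)) (a)) (d)) - (mul (mul (c) (b)) (mul (a) (d)))) + ((mul (mul (mul (c) (b)) (d)) (a)) - (mul (mul (c) (b)) (mul (d) (a))))) *~ (Negz 12) + (((mul (mul (b) (mul (a) (c))) (d)) - (mul (b) (mul (mul (a) (c)) (d)))) + ((mul (mul (b) (d)) (mul (a) (c))) - (mul (b) (mul (d) (mul (a) (c)))))) *~ (Posz 1) + (((mul (mul (mul (b) (d)) (a)) (c)) - (mul (mul (b) (d)) (mul (a) (c)))) + ((mul (mul (mul (b) (d)) (c)) (a)) - (mul (mul (b) (d)) (mul (c) (a))))) *~ (Posz 1) + (((mul (mul (mul (d) (b)) (a)) (c)) - (mul (mul (d) (b)) (mul (a) (c)))) +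 ((mul (mul (mul (d) (b)) (c)) (a)) - (mul (mul (d) (b)) (mul (c) (a))))) *~ (Negz 0) + (((mul (mul (b) (mul (a) (d))) (c)) - (mul (b) (mul (mul (a) (d)) (c)))) + ((mul (mul (b) (c)) (mul (a) (d))) - (mul (b) (mul (c) (mul (a) (d)))))) *~ (Negz 4) + (((mul (mul (b) (mul (d) (a))) (c)) - (mul (b) (mul (mul (d) (a)) (c)))) + ((mul (mul (b) (c)) (mul (d) (a))) - (mul (b) (mul (c) (mul (d) (a)))))) *~ (Negz 5) + (((mul (mul (b) (a)) (mul (c) (d))) - (mul (b) (mul (a) (mul (c) (d))))) + ((mul (mul (b) (mul (c) (d))) (a)) - (mul (b) (mul (mul (c) (d)) (a))))) *~ (Posz 6) + (((mul (mul (c) (mul (a) (b))) (d)) - (mul (c) (mul (mul (a) (b)) (d)))) + ((mul (mul (c) (d)) (mul (a) (b))) - (mul (c) (mul (d) (mul (a) (b)))))) *~ (Posz 6) + (((mul (mul (mul (c) (d)) (a)) (b)) - (mul (mul (c) (d)) (mul (a) (b)))) + ((mul (mul (mul (c) (d)) (b)) (a)) - (mul (mul (c) (d)) (mul (b) (a))))) *~ (Negz 4) + (((mul (mul (mul (d) (c)) (a)) (b)) - (mul (mul (d) (c)) (mul (a) (b)))) + ((mul (mul (mul (d) (c)) (b)) (a)) - (mul (mul (d) (c)) (mul (b) (a))))) *~ (Posz 5) + ((mul (mul (mul (b) (c)) (d)) (a)) - (mul (mul (d) (mul (b) (c))) (a))) *~ (Negz 3) + ((mul (mul (mul (b) (d))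 (c)) (a)) - (mul (mul (c) (mul (b) (d))) (a))) *~ (Negz 5) + ((mul (mul (mul (d) (b)) (c)) (a)) - (mul (mul (c) (mul (d) (b))) (a))) *~ (Negz 2) + ((mul (mul (b) (mul (c) (d))) (a)) - (mul (mul (mul (c) (d)) (b)) (a))) *~ (Negz 1) + ((mul (mul (b) (mul (d) (c))) (a)) - (mul (mul (mul (d) (c)) (b)) (a))) *~ (Posz 5) + ((mul (mul (b) (c)) (mul (a) (d))) - (mul (mul (c) (b)) (mul (a) (d)))) *~ (Posz 5) + ((mul (mul (b) (c)) (mul (d) (a))) - (mul (mul (c) (b)) (mul (d) (a)))) *~ (Posz 13) + ((mul (mul (b) (d)) (mul (a) (c))) - (mul (mul (d) (b)) (mul (a) (c)))) *~ (Negz 0) + ((mul (mul (b) (d)) (mul (c) (a))) - (mul (mul (d) (b)) (mul (c) (a)))) *~ (Posz 1) + ((mul (mul (c) (d)) (mul (a) (b))) - (mul (mul (d) (c)) (mul (a) (b)))) *~ (Negz 1) + ((mul (mul (c) (d)) (mul (b) (a))) - (mul (mul (d) (c)) (mul (b) (a)))) *~ (Negz 4) + (((mul (mul (mul (b) (c)) (d)) (a)) - (mul (mul (b) (mul (c) (d))) (a))) + ((mul (mul (mul (c) (b)) (d)) (a)) - (mul (mul (c) (mul (b) (d))) (a)))) *~ (Posz 3) + (((mul (a) (mul (mul (b) (c)) (d))) - (mul (a) (mul (b) (mul (c) (d))))) + ((mul (a) (mul (mul (c) (b)) (d))) - (mul (a) (mul (c) (mul (b) (d)))))) *~ (Negz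 0) + (((mul (mul (mul (b) (c)) (d)) (a)) - (mul (mul (b) (mul (c) (d))) (a))) + ((mul (mul (mul (b) (d)) (c)) (a)) - (mul (mul (b) (mul (d) (c))) (a)))) *~ (Posz 1) + (((mul (a) (mul (mul (b) (c)) (d))) - (mul (a) (mul (b) (mul (c) (d))))) + ((mul (a) (mul (mul (b) (d)) (c))) - (mul (a) (mul (b) (mul (d) (c)))))) *~ (Posz 1) + ((mul (mul (mul (b) (c)) (d)) (a)) - (mul (mul (mul (c) (b)) (d)) (a))) *~ (Negz 6) + (((mul (mul (mul (b) (d)) (c)) (a)) - (mul (mul (b) (mul (d) (c))) (a))) + ((mul (mul (mul (d) (b)) (c)) (a)) - (mul (mul (d) (mul (b) (c))) (a)))) *~ (Posz 4) + (((mul (a) (mul (mul (b) (d)) (c))) - (mul (a) (mul (b) (mul (d) (c))))) + ((mul (a) (mul (mul (d) (b)) (c))) - (mul (a) (mul (d) (mul (b) (c)))))) *~ (Negz 6) + (((mul (mul (mul (c) (b)) (d)) (a)) - (mul (mul (c) (mul (b) (d))) (a))) + ((mul (mul (mul (c) (d)) (b)) (a)) - (mul (mul (c) (mul (d) (b))) (a)))) *~ (Posz 3) + (((mul (a) (mul (mul (c) (b)) (d))) - (mul (a) (mul (c) (mul (b) (d))))) + ((mul (a) (mul (mul (c) (d)) (b))) - (mul (a) (mul (c) (mul (d) (b)))))) *~ (Posz 6) + (((mul (a) (mul (mul (c) (d)) (b))) - (mul (a) (mul (c) (mul (d) (b))))) + ((mul (a) (mul (mul (d) (c)) (b))) - (mul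 (a) (mul (d) (mul (c) (b)))))) *~ (Posz 3) + (((mul (mul (mul (a) (c)) (d)) (b)) - (mul (mul (a) (mul (c) (d))) (b))) + ((mul (mul (mul (c) (a)) (d)) (b)) - (mul (mul (c) (mul (a) (d))) (b)))) *~ (Posz 6) + (((mul (b) (mul (mul (a) (c)) (d))) - (mul (b) (mul (a) (mul (c) (d))))) + ((mul (b) (mul (mul (c) (a)) (d))) - (mul (b) (mul (c) (mul (a) (d)))))) *~ (Negz 0) + (((mul (mul (mul (a) (c)) (d)) (b)) - (mul (mul (a) (mul (c) (d))) (b))) + ((mul (mul (mul (a) (d)) (c)) (b)) - (mul (mul (a) (mul (d) (c))) (b)))) *~ (Posz 1) + (((mul (b) (mul (mul (a) (c)) (d))) - (mul (b) (mul (a) (mul (c) (d))))) + ((mul (b) (mul (mul (a) (d)) (c))) - (mul (b) (mul (a) (mul (d) (c)))))) *~ (Posz 1) + ((mul (mul (mul (a) (c)) (d)) (b)) - (mul (mul (mul (c) (a)) (d)) (b))) *~ (Negz 3) + (((mul (mul (mul (a) (d)) (c)) (b)) - (mul (mul (a) (mul (d) (c))) (b))) + ((mul (mul (mul (d) (a)) (c)) (b)) - (mul (mul (d) (mul (a) (c))) (b)))) *~ (Posz 4) + (((mul (b) (mul (mul (a) (d)) (c))) - (mul (b) (mul (a) (mul (d) (c))))) + ((mul (b) (mul (mul (d) (a)) (c))) - (mul (b) (mul (d) (mul (a) (c)))))) *~ (Negz 0) + (((mul (b) (mul (mul (c) (a)) (d))) - (mul (b) (mul (c) (mul (a) (d)))))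 + ((mul (b) (mul (mul (c) (d)) (a))) - (mul (b) (mul (c) (mul (d) (a)))))) *~ (Posz 6) + (((mul (mul (mul (a) (b)) (d)) (c)) - (mul (mul (a) (mul (b) (d))) (c))) + ((mul (mul (mul (a) (d)) (b)) (c)) - (mul (mul (a) (mul (d) (b))) (c)))) *~ (Negz 5).
  by lin_solve.
apply: (lin_cancel (D:=6)) => //.
rewrite E ?(F1 (mul (a) (b)) (c) (d)) ?(F2 (mul (a) (b)) (c) (d)) ?(F1 (mul (a) (c)) (b) (d)) ?(F2 (mul (a) (c)) (b) (d)) ?(F1 (mul (c) (a)) (b) (d)) ?(F2 (mul (c) (a)) (b) (d)) ?(F3 (mul (c) (a)) (b) (d)) ?(F1 (a) (mul (b) (c)) (d)) ?(F2 (a) (mul (b) (c)) (d)) ?(F1 (a) (mul (c) (b)) (d)) ?(F2 (a) (mul (c) (b)) (d)) ?(F3 (a) (mul (c) (b)) (d)) ?(F1 (mul (a) (d)) (b) (c)) ?(F2 (mul (a) (d)) (b) (c)) ?(F1 (mul (d) (a)) (b) (c)) ?(F2 (mul (d) (a)) (b) (c)) ?(F3 (mul (d) (a)) (b) (c)) ?(F1 (a) (mul (b) (d)) (c)) ?(F2 (a) (mul (b) (d)) (c)) ?(F1 (a) (mul (d) (b)) (c)) ?(F2 (a) (mul (d) (b)) (c)) ?(F3 (a) (mul (d) (b)) (c)) ?(F1 (a) (b) (mul (c) (d))) ?(F2 (a) (b) (mul (c) (d))) ?(F2 (a) (b) (mul (d) (c))) ?(F3 (mul (a) (c)) (d) (b))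 ?(F3 (mul (a) (d)) (c) (b)) ?(F1 (a) (mul (c) (d)) (b)) ?(F3 (a) (mul (c) (d)) (b)) ?(F1 (a) (mul (d) (c)) (b)) ?(F3 (a) (mul (d) (c)) (b)) ?(F3 (a) (c) (mul (b) (d))) ?(F3 (a) (c) (mul (d) (b))) ?(F3 (a) (d) (mul (b) (c))) ?(F3 (a) (d) (mul (c) (b))) ?(F2 (mul (b) (c)) (a) (d)) ?(F2 (mul (c) (b)) (a) (d)) ?(F2 (b) (mul (a) (c)) (d)) ?(F2 (mul (b) (d)) (a) (c)) ?(F2 (mul (d) (b)) (a) (c)) ?(F2 (b) (mul (a) (d)) (c)) ?(F2 (b) (mul (d) (a)) (c)) ?(F2 (b) (a) (mul (c) (d))) ?(F2 (c) (mul (a) (b)) (d)) ?(F2 (mul (c) (d)) (a) (b)) ?(F2 (mul (d) (c)) (a) (b)) ?(F3 (mul (b) (c)) (d) (a)) ?(F3 (mul (b) (d)) (c) (a)) ?(F3 (mul (d) (b)) (c) (a)) ?(F3 (b) (mul (c) (d)) (a)) ?(F3 (b) (mul (d) (c)) (a)) ?(F3 (b) (c) (mul (a) (d))) ?(F3 (b) (c) (mul (d) (a))) ?(F3 (b) (d) (mul (a) (c))) ?(F3 (b) (d) (mul (c) (a))) ?(F3 (c) (d) (mul (a) (b))) ?(F3 (c) (d) (mul (b) (a))) ?(F1r (b) (c) (d) (a)) ?(F1l (b) (c) (d) (a)) ?(F2r (b) (c) (d) (a)) ?(F2l (b) (c) (d) (a)) ?(F3r (b) (c) (d) (a)) ?(F1r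 (b) (d) (c) (a)) ?(F1l (b) (d) (c) (a)) ?(F2r (c) (b) (d) (a)) ?(F2l (c) (b) (d) (a)) ?(F1l (c) (d) (b) (a)) ?(F1r (a) (c) (d) (b)) ?(F1l (a) (c) (d) (b)) ?(F2r (a) (c) (d) (b)) ?(F2l (a) (c) (d) (b)) ?(F3r (a) (c) (d) (b)) ?(F1r (a) (d) (c) (b)) ?(F1l (a) (d) (c) (b)) ?(F2l (c) (a) (d) (b)) ?(F2r (a) (b) (d) (c)) ?mul0rz ?addr0 ?add0r //.
Qed.

Lemma K3 (a b c d : A) : mul (mul (a) (mul (b) (c))) (d) = mul (mul (mul (a) (b)) (c)) (d).
Proof.
have E : ((mul (mul (a) (mul (b) (c))) (d)) - (mul (mul (mul (a) (b)) (c)) (d))) *+ 3 = (((mul (mul (mul (a) (b)) (c)) (d)) - (mul (mul (a) (b)) (mul (c) (d)))) + ((mul (mul (mul (a) (b)) (d)) (c)) - (mul (mul (a) (b)) (mul (d) (c))))) *~ (Negz 2) + (((mul (mul (mul (a) (c)) (b)) (d)) - (mul (mul (a) (c)) (mul (b) (d)))) + ((mul (mul (b) (mul (a) (c))) (d)) - (mul (b) (mul (mul (a) (c)) (d))))) *~ (Negz 0) + ((mul (mul (mul (a) (c)) (b)) (d)) - (mul (mul (b) (mul (a) (c))) (d))) *~ (Posz 1) + (((mul (mul (mul (c) (a)) (b)) (d)) - (mul (mul (c) (a)) (mul (b) (d)))) + ((mul (mul (b) (mul (c) (a))) (d)) - (mul (b) (mul (mul (c) (a)) (d))))) *~ (Negz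 0) + (((mul (mul (mul (c) (a)) (b)) (d)) - (mul (mul (c) (a)) (mul (b) (d)))) + ((mul (mul (mul (c) (a)) (d)) (b)) - (mul (mul (c) (a)) (mul (d) (b))))) *~ (Posz 2) + ((mul (mul (mul (c) (a)) (b)) (d)) - (mul (mul (b) (mul (c) (a))) (d))) *~ (Negz 0) + (((mul (mul (a) (mul (b) (c))) (d)) - (mul (a) (mul (mul (b) (c)) (d)))) + ((mul (mul (mul (b) (c)) (a)) (d)) - (mul (mul (b) (c)) (mul (a) (d))))) *~ (Posz 3) + (((mul (mul (a) (mul (b) (c))) (d)) - (mul (a) (mul (mul (b) (c)) (d)))) + ((mul (mul (a) (d)) (mul (b) (c))) - (mul (a) (mul (d) (mul (b) (c)))))) *~ (Negz 0) + ((mul (mul (a) (mul (b) (c))) (d)) - (mul (mul (mul (b) (c)) (a)) (d))) *~ (Posz 1) + (((mul (mul (a) (mul (c) (b))) (d)) - (mul (a) (mul (mul (c) (b)) (d)))) + ((mul (mul (mul (c) (b)) (a)) (d)) - (mul (mul (c) (b)) (mul (a) (d))))) *~ (Negz 1) + (((mul (mul (a) (mul (c) (b))) (d)) - (mul (a) (mul (mul (c) (b)) (d)))) + ((mul (mul (a) (d)) (mul (c) (b))) - (mul (a) (mul (d) (mul (c) (b)))))) *~ (Posz 2) + (((mul (mul (mul (a) (d)) (b)) (c)) - (mul (mul (a) (d)) (mul (b) (c)))) + ((mul (mul (b) (mul (a) (d))) (c)) - (mul (b) (mul (mul (a) (d)) (c))))) *~ (Negz 0) + (((mul (mul (mul (a)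 (d)) (b)) (c)) - (mul (mul (a) (d)) (mul (b) (c)))) + ((mul (mul (mul (a) (d)) (c)) (b)) - (mul (mul (a) (d)) (mul (c) (b))))) *~ (Negz 1) + (((mul (mul (mul (d) (a)) (b)) (c)) - (mul (mul (d) (a)) (mul (b) (c)))) + ((mul (mul (b) (mul (d) (a))) (c)) - (mul (b) (mul (mul (d) (a)) (c))))) *~ (Negz 1) + (((mul (mul (mul (d) (a)) (b)) (c)) - (mul (mul (d) (a)) (mul (b) (c)))) + ((mul (mul (mul (d) (a)) (c)) (b)) - (mul (mul (d) (a)) (mul (c) (b))))) *~ (Posz 4) + ((mul (mul (mul (d) (a)) (b)) (c)) - (mul (mul (b) (mul (d) (a))) (c))) *~ (Negz 1) + (((mul (mul (a) (mul (b) (d))) (c)) - (mul (a) (mul (mul (b) (d)) (c)))) + ((mul (mul (mul (b) (d)) (a)) (c)) - (mul (mul (b) (d)) (mul (a) (c))))) *~ (Posz 3) + (((mul (mul (a) (mul (d) (b))) (c)) - (mul (a) (mul (mul (d) (b)) (c)))) + ((mul (mul (mul (d) (b)) (a)) (c)) - (mul (mul (d) (b)) (mul (a) (c))))) *~ (Negz 0) + (((mul (mul (a) (mul (d) (b))) (c)) - (mul (a) (mul (mul (d) (b)) (c)))) + ((mul (mul (a) (c)) (mul (d) (b))) - (mul (a) (mul (c) (mul (d) (b)))))) *~ (Posz 2) + ((mul (mul (a) (mul (d) (b))) (c)) - (mul (mul (mul (d) (b)) (a)) (c))) *~ (Posz 2) + (((mul (mul (a) (b)) (mul (c) (d))) -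 (mul (a) (mul (b) (mul (c) (d))))) + ((mul (mul (b) (a)) (mul (c) (d))) - (mul (b) (mul (a) (mul (c) (d)))))) *~ (Negz 0) + (((mul (mul (a) (b)) (mul (c) (d))) - (mul (a) (mul (b) (mul (c) (d))))) + ((mul (mul (a) (mul (c) (d))) (b)) - (mul (a) (mul (mul (c) (d)) (b))))) *~ (Negz 0) + ((mul (mul (a) (b)) (mul (c) (d))) - (mul (mul (b) (a)) (mul (c) (d)))) *~ (Negz 0) + (((mul (mul (a) (b)) (mul (d) (c))) - (mul (a) (mul (b) (mul (d) (c))))) + ((mul (mul (a) (mul (d) (c))) (b)) - (mul (a) (mul (mul (d) (c)) (b))))) *~ (Negz 2) + ((mul (mul (mul (a) (c)) (d)) (b)) - (mul (mul (d) (mul (a) (c))) (b))) *~ (Posz 4) + ((mul (mul (mul (a) (d)) (c)) (b)) - (mul (mul (c) (mul (a) (d))) (b))) *~ (Posz 4) + (((mul (mul (a) (mul (c) (d))) (b)) - (mul (a) (mul (mul (c) (d)) (b)))) + ((mul (mul (mul (c) (d)) (a)) (b)) - (mul (mul (c) (d)) (mul (a) (b))))) *~ (Negz 0) + (((mul (mul (a) (mul (d) (c))) (b)) - (mul (a) (mul (mul (d) (c)) (b)))) + ((mul (mul (mul (d) (c)) (a)) (b)) - (mul (mul (d) (c)) (mul (a) (b))))) *~ (Posz 1) + ((mul (mul (a) (c)) (mul (b) (d))) - (mul (mul (c) (a)) (mul (b) (d)))) *~ (Negz 0) + ((mul (mul (a) (c)) (mul (d) (b))) - (mul (mul (c) (a))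 (mul (d) (b)))) *~ (Negz 1) + ((mul (mul (a) (d)) (mul (b) (c))) - (mul (mul (d) (a)) (mul (b) (c)))) *~ (Negz 1) + ((mul (mul (a) (d)) (mul (c) (b))) - (mul (mul (d) (a)) (mul (c) (b)))) *~ (Negz 3) + (((mul (mul (mul (b) (c)) (a)) (d)) - (mul (mul (b) (c)) (mul (a) (d)))) + ((mul (mul (mul (b) (c)) (d)) (a)) - (mul (mul (b) (c)) (mul (d) (a))))) *~ (Negz 1) + (((mul (mul (mul (c) (b)) (a)) (d)) - (mul (mul (c) (b)) (mul (a) (d)))) + ((mul (mul (mul (c) (b)) (d)) (a)) - (mul (mul (c) (b)) (mul (d) (a))))) *~ (Posz 2) + (((mul (mul (b) (mul (a) (c))) (d)) - (mul (b) (mul (mul (a) (c)) (d)))) + ((mul (mul (b) (d)) (mul (a) (c))) - (mul (b) (mul (d) (mul (a) (c)))))) *~ (Posz 2) + (((mul (mul (mul (b) (d)) (a)) (c)) - (mul (mul (b) (d)) (mul (a) (c)))) + ((mul (mul (mul (b) (d)) (c)) (a)) - (mul (mul (b) (d)) (mul (c) (a))))) *~ (Negz 2) + (((mul (mul (mul (d) (b)) (a)) (c)) - (mul (mul (d) (b)) (mul (a) (c)))) + ((mul (mul (mul (d) (b)) (c)) (a)) - (mul (mul (d) (b)) (mul (c) (a))))) *~ (Posz 3) + (((mul (mul (b) (mul (a) (d))) (c)) - (mul (b) (mul (mul (a) (d)) (c)))) + ((mul (mul (b) (c)) (mul (a) (d))) - (mul (b) (mul (c) (mul (a) (d)))))) *~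 (Posz 1) + (((mul (mul (mul (c) (d)) (a)) (b)) - (mul (mul (c) (d)) (mul (a) (b)))) + ((mul (mul (mul (c) (d)) (b)) (a)) - (mul (mul (c) (d)) (mul (b) (a))))) *~ (Posz 1) + (((mul (mul (mul (d) (c)) (a)) (b)) - (mul (mul (d) (c)) (mul (a) (b)))) + ((mul (mul (mul (d) (c)) (b)) (a)) - (mul (mul (d) (c)) (mul (b) (a))))) *~ (Negz 0) + ((mul (mul (mul (b) (c)) (d)) (a)) - (mul (mul (d) (mul (b) (c))) (a))) *~ (Posz 4) + ((mul (mul (mul (b) (d)) (c)) (a)) - (mul (mul (c) (mul (b) (d))) (a))) *~ (Posz 4) + ((mul (mul (mul (d) (b)) (c)) (a)) - (mul (mul (c) (mul (d) (b))) (a))) *~ (Posz 1) + ((mul (mul (b) (mul (d) (c))) (a)) - (mul (mul (mul (d) (c)) (b)) (a))) *~ (Negz 0) + ((mul (mul (b) (c)) (mul (d) (a))) - (mul (mul (c) (b)) (mul (d) (a)))) *~ (Negz 1) + ((mul (mul (b) (d)) (mul (a) (c))) - (mul (mul (d) (b)) (mul (a) (c)))) *~ (Negz 1) + ((mul (mul (b) (d)) (mul (c) (a))) - (mul (mul (d) (b)) (mul (c) (a)))) *~ (Negz 2) + ((mul (mul (c) (d)) (mul (b) (a))) - (mul (mul (d) (c)) (mul (b) (a)))) *~ (Posz 1) + (((mul (mul (mul (b) (c)) (d)) (a)) - (mul (mul (b) (mul (c) (d))) (a))) + ((mul (mul (mul (c) (b)) (d)) (a)) - (mul (mul (c) (mul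 (b) (d))) (a)))) *~ (Negz 2) + (((mul (mul (mul (b) (c)) (d)) (a)) - (mul (mul (b) (mul (c) (d))) (a))) + ((mul (mul (mul (b) (d)) (c)) (a)) - (mul (mul (b) (mul (d) (c))) (a)))) *~ (Posz 3) + (((mul (a) (mul (mul (b) (c)) (d))) - (mul (a) (mul (b) (mul (c) (d))))) + ((mul (a) (mul (mul (b) (d)) (c))) - (mul (a) (mul (b) (mul (d) (c)))))) *~ (Posz 2) + ((mul (mul (mul (b) (c)) (d)) (a)) - (mul (mul (mul (c) (b)) (d)) (a))) *~ (Negz 1) + (((mul (mul (mul (b) (d)) (c)) (a)) - (mul (mul (b) (mul (d) (c))) (a))) + ((mul (mul (mul (d) (b)) (c)) (a)) - (mul (mul (d) (mul (b) (c))) (a)))) *~ (Negz 3) + (((mul (a) (mul (mul (b) (d)) (c))) - (mul (a) (mul (b) (mul (d) (c))))) + ((mul (a) (mul (mul (d) (b)) (c))) - (mul (a) (mul (d) (mul (b) (c)))))) *~ (Posz 1) + (((mul (mul (mul (c) (b)) (d)) (a)) - (mul (mul (c) (mul (b) (d))) (a))) + ((mul (mul (mul (c) (d)) (b)) (a)) - (mul (mul (c) (mul (d) (b))) (a)))) *~ (Negz 0) + (((mul (a) (mul (mul (c) (d)) (b))) - (mul (a) (mul (c) (mul (d) (b))))) + ((mul (a) (mul (mul (d) (c)) (b))) - (mul (a) (mul (d) (mul (c) (b)))))) *~ (Negz 1) + (((mul (mul (mul (a) (c)) (d)) (b)) - (mul (mul (a) (mul (c) (d))) (b))) + ((mul (mul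 (mul (c) (a)) (d)) (b)) - (mul (mul (c) (mul (a) (d))) (b)))) *~ (Negz 3) + (((mul (b) (mul (mul (a) (c)) (d))) - (mul (b) (mul (a) (mul (c) (d))))) + ((mul (b) (mul (mul (c) (a)) (d))) - (mul (b) (mul (c) (mul (a) (d)))))) *~ (Negz 0) + (((mul (mul (mul (a) (c)) (d)) (b)) - (mul (mul (a) (mul (c) (d))) (b))) + ((mul (mul (mul (a) (d)) (c)) (b)) - (mul (mul (a) (mul (d) (c))) (b)))) *~ (Posz 2) + (((mul (b) (mul (mul (a) (c)) (d))) - (mul (b) (mul (a) (mul (c) (d))))) + ((mul (b) (mul (mul (a) (d)) (c))) - (mul (b) (mul (a) (mul (d) (c)))))) *~ (Posz 2) + ((mul (mul (mul (a) (c)) (d)) (b)) - (mul (mul (mul (c) (a)) (d)) (b))) *~ (Negz 1) + (((mul (mul (mul (a) (d)) (c)) (b)) - (mul (mul (a) (mul (d) (c))) (b))) + ((mul (mul (mul (d) (a)) (c)) (b)) - (mul (mul (d) (mul (a) (c))) (b)))) *~ (Negz 3) + (((mul (b) (mul (mul (a) (d)) (c))) - (mul (b) (mul (a) (mul (d) (c))))) + ((mul (b) (mul (mul (d) (a)) (c))) - (mul (b) (mul (d) (mul (a) (c)))))) *~ (Negz 1) + (((mul (mul (mul (a) (b)) (d)) (c)) - (mul (mul (a) (mul (b) (d))) (c))) + ((mul (mul (mul (a) (d)) (b)) (c)) - (mul (mul (a) (mul (d) (b))) (c)))) *~ (Posz 3).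
  by lin_solve.
apply: (lin_cancel (D:=3)) => //.
rewrite E ?(F2 (mul (a) (b)) (c) (d)) ?(F1 (mul (a) (c)) (b) (d)) ?(F3 (mul (a) (c)) (b) (d)) ?(F1 (mul (c) (a)) (b) (d)) ?(F2 (mul (c) (a)) (b) (d)) ?(F3 (mul (c) (a)) (b) (d)) ?(F1 (a) (mul (b) (c)) (d)) ?(F2 (a) (mul (b) (c)) (d)) ?(F3 (a) (mul (b) (c)) (d)) ?(F1 (a) (mul (c) (b)) (d)) ?(F2 (a) (mul (c) (b)) (d)) ?(F1 (mul (a) (d)) (b) (c)) ?(F2 (mul (a) (d)) (b) (c)) ?(F1 (mul (d) (a)) (b) (c)) ?(F2 (mul (d) (a)) (b) (c)) ?(F3 (mul (d) (a)) (b) (c)) ?(F1 (a) (mul (b) (d)) (c)) ?(F1 (a) (mul (d) (b)) (c)) ?(F2 (a) (mul (d) (b)) (c)) ?(F3 (a) (mul (d) (b)) (c)) ?(F1 (a) (b) (mul (c) (d))) ?(F2 (a) (b) (mul (c) (d))) ?(F3 (a) (b) (mul (c) (d))) ?(F2 (a) (b) (mul (d) (c))) ?(F3 (mul (a) (c)) (d) (b)) ?(F3 (mul (a) (d)) (c) (b)) ?(F1 (a) (mul (c) (d)) (b)) ?(F1 (a) (mul (d) (c)) (b)) ?(F3 (a) (c) (mul (b) (d))) ?(F3 (a) (c) (mul (d) (b))) ?(F3 (a) (d) (mul (b) (c))) ?(F3 (a) (d) (mul (c) (b))) ?(F2 (mul (b) (c)) (a) (d)) ?(F2 (mul (c) (b))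 (a) (d)) ?(F2 (b) (mul (a) (c)) (d)) ?(F2 (mul (b) (d)) (a) (c)) ?(F2 (mul (d) (b)) (a) (c)) ?(F2 (b) (mul (a) (d)) (c)) ?(F2 (mul (c) (d)) (a) (b)) ?(F2 (mul (d) (c)) (a) (b)) ?(F3 (mul (b) (c)) (d) (a)) ?(F3 (mul (b) (d)) (c) (a)) ?(F3 (mul (d) (b)) (c) (a)) ?(F3 (b) (mul (d) (c)) (a)) ?(F3 (b) (c) (mul (d) (a))) ?(F3 (b) (d) (mul (a) (c))) ?(F3 (b) (d) (mul (c) (a))) ?(F3 (c) (d) (mul (b) (a))) ?(F1r (b) (c) (d) (a)) ?(F2r (b) (c) (d) (a)) ?(F2l (b) (c) (d) (a)) ?(F3r (b) (c) (d) (a)) ?(F1r (b) (d) (c) (a)) ?(F1l (b) (d) (c) (a)) ?(F2r (c) (b) (d) (a)) ?(F1l (c) (d) (b) (a)) ?(F1r (a) (c) (d) (b)) ?(F1l (a) (c) (d) (b)) ?(F2r (a) (c) (d) (b)) ?(F2l (a) (c) (d) (b)) ?(F3r (a) (c) (d) (b)) ?(F1r (a) (d) (c) (b)) ?(F1l (a) (d) (c) (b)) ?(F2r (a) (b) (d) (c)) ?mul0rz ?addr0 ?add0r //.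
Qed.

Lemma K1 (a b c d : A) : mul (mul (mul (a) (b)) (c)) (d) = mul (mul (mul (a) (c)) (b)) (d).
Proof.
have E : ((mul (mul (mul (a) (b)) (c)) (d)) - (mul (mul (mul (a) (c)) (b)) (d))) *+ 3 = (((mul (mul (mul (a) (b)) (c)) (d)) - (mul (mul (a) (b)) (mul (c) (d)))) + ((mul (mul (mul (a) (b)) (d)) (c)) - (mul (mul (a) (b)) (mul (d) (c))))) *~ (Posz 3) + (((mul (mul (mul (a) (c)) (b)) (d)) - (mul (mul (a) (c)) (mul (b) (d)))) + ((mul (mul (mul (a) (c)) (d)) (b)) - (mul (mul (a) (c)) (mul (d) (b))))) *~ (Negz 0) + ((mul (mul (mul (a) (c)) (b)) (d)) - (mul (mul (b) (mul (a) (c))) (d))) *~ (Negz 1) + (((mul (mul (a) (mul (b) (c))) (d)) - (mul (a) (mul (mul (b) (c)) (d)))) + ((mul (mul (mul (b) (c)) (a)) (d)) - (mul (mul (b) (c)) (mul (a) (d))))) *~ (Negz 1) + (((mul (mul (a) (mul (b) (c))) (d)) - (mul (a) (mul (mul (b) (c)) (d)))) + ((mul (mul (a) (d)) (mul (b) (c))) - (mul (a) (mul (d) (mul (b) (c)))))) *~ (Posz 1) + ((mul (mul (a) (mul (b) (c))) (d)) - (mul (mul (mul (b) (c)) (a)) (d))) *~ (Posz 1) + (((mul (mul (a) (mul (c) (b))) (d)) - (mul (a) (mul (mul (c) (b)) (d)))) + ((mul (mul (mul (c) (b)) (a)) (d)) - (mul (mul (c) (b)) (mul (a) (d))))) *~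 (Posz 2) + (((mul (mul (a) (mul (c) (b))) (d)) - (mul (a) (mul (mul (c) (b)) (d)))) + ((mul (mul (a) (d)) (mul (c) (b))) - (mul (a) (mul (d) (mul (c) (b)))))) *~ (Negz 0) + ((mul (mul (a) (mul (c) (b))) (d)) - (mul (mul (mul (c) (b)) (a)) (d))) *~ (Negz 0) + (((mul (mul (mul (a) (d)) (b)) (c)) - (mul (mul (a) (d)) (mul (b) (c)))) + ((mul (mul (mul (a) (d)) (c)) (b)) - (mul (mul (a) (d)) (mul (c) (b))))) *~ (Posz 3) + (((mul (mul (mul (d) (a)) (b)) (c)) - (mul (mul (d) (a)) (mul (b) (c)))) + ((mul (mul (b) (mul (d) (a))) (c)) - (mul (b) (mul (mul (d) (a)) (c))))) *~ (Posz 2) + (((mul (mul (mul (d) (a)) (b)) (c)) - (mul (mul (d) (a)) (mul (b) (c)))) + ((mul (mul (mul (d) (a)) (c)) (b)) - (mul (mul (d) (a)) (mul (c) (b))))) *~ (Negz 3) + ((mul (mul (mul (d) (a)) (b)) (c)) - (mul (mul (b) (mul (d) (a))) (c))) *~ (Posz 2) + (((mul (mul (a) (mul (b) (d))) (c)) - (mul (a) (mul (mul (b) (d)) (c)))) + ((mul (mul (mul (b) (d)) (a)) (c)) - (mul (mul (b) (d)) (mul (a) (c))))) *~ (Negz 1) + (((mul (mul (a) (mul (b) (d))) (c)) - (mul (a) (mul (mul (b) (d)) (c)))) + ((mul (mul (a) (c)) (mul (b) (d))) - (mul (a) (mul (c) (mul (b) (d)))))) *~ (Negz 0) + (((mul (mul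 (a) (mul (d) (b))) (c)) - (mul (a) (mul (mul (d) (b)) (c)))) + ((mul (mul (a) (c)) (mul (d) (b))) - (mul (a) (mul (c) (mul (d) (b)))))) *~ (Negz 0) + ((mul (mul (a) (mul (d) (b))) (c)) - (mul (mul (mul (d) (b)) (a)) (c))) *~ (Negz 1) + (((mul (mul (a) (b)) (mul (c) (d))) - (mul (a) (mul (b) (mul (c) (d))))) + ((mul (mul (b) (a)) (mul (c) (d))) - (mul (b) (mul (a) (mul (c) (d)))))) *~ (Posz 2) + (((mul (mul (a) (b)) (mul (c) (d))) - (mul (a) (mul (b) (mul (c) (d))))) + ((mul (mul (a) (mul (c) (d))) (b)) - (mul (a) (mul (mul (c) (d)) (b))))) *~ (Negz 0) + ((mul (mul (a) (b)) (mul (c) (d))) - (mul (mul (b) (a)) (mul (c) (d)))) *~ (Posz 2) + (((mul (mul (a) (b)) (mul (d) (c))) - (mul (a) (mul (b) (mul (d) (c))))) + ((mul (mul (a) (mul (d) (c))) (b)) - (mul (a) (mul (mul (d) (c)) (b))))) *~ (Posz 3) + ((mul (mul (mul (a) (c)) (d)) (b)) - (mul (mul (d) (mul (a) (c))) (b))) *~ (Negz 3) + ((mul (mul (mul (a) (d)) (c)) (b)) - (mul (mul (c) (mul (a) (d))) (b))) *~ (Negz 3) + (((mul (mul (a) (mul (c) (d))) (b)) - (mul (a) (mul (mul (c) (d)) (b)))) + ((mul (mul (mul (c) (d)) (a)) (b)) - (mul (mul (c) (d)) (mul (a) (b))))) *~ (Posz 2) + (((mul (mul (a) (mul (d) (c)))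 (b)) - (mul (a) (mul (mul (d) (c)) (b)))) + ((mul (mul (mul (d) (c)) (a)) (b)) - (mul (mul (d) (c)) (mul (a) (b))))) *~ (Negz 1) + ((mul (mul (a) (d)) (mul (b) (c))) - (mul (mul (d) (a)) (mul (b) (c)))) *~ (Posz 2) + ((mul (mul (a) (d)) (mul (c) (b))) - (mul (mul (d) (a)) (mul (c) (b)))) *~ (Posz 4) + (((mul (mul (mul (b) (c)) (a)) (d)) - (mul (mul (b) (c)) (mul (a) (d)))) + ((mul (mul (mul (b) (c)) (d)) (a)) - (mul (mul (b) (c)) (mul (d) (a))))) *~ (Posz 3) + (((mul (mul (mul (c) (b)) (a)) (d)) - (mul (mul (c) (b)) (mul (a) (d)))) + ((mul (mul (mul (c) (b)) (d)) (a)) - (mul (mul (c) (b)) (mul (d) (a))))) *~ (Negz 2) + (((mul (mul (b) (mul (a) (c))) (d)) - (mul (b) (mul (mul (a) (c)) (d)))) + ((mul (mul (b) (d)) (mul (a) (c))) - (mul (b) (mul (d) (mul (a) (c)))))) *~ (Negz 1) + (((mul (mul (mul (b) (d)) (a)) (c)) - (mul (mul (b) (d)) (mul (a) (c)))) + ((mul (mul (mul (b) (d)) (c)) (a)) - (mul (mul (b) (d)) (mul (c) (a))))) *~ (Posz 2) + (((mul (mul (mul (d) (b)) (a)) (c)) - (mul (mul (d) (b)) (mul (a) (c)))) + ((mul (mul (mul (d) (b)) (c)) (a)) - (mul (mul (d) (b)) (mul (c) (a))))) *~ (Negz 1) + (((mul (mul (mul (c) (d)) (a)) (b)) - (mul (mul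 (c) (d)) (mul (a) (b)))) + ((mul (mul (mul (c) (d)) (b)) (a)) - (mul (mul (c) (d)) (mul (b) (a))))) *~ (Negz 1) + (((mul (mul (mul (d) (c)) (a)) (b)) - (mul (mul (d) (c)) (mul (a) (b)))) + ((mul (mul (mul (d) (c)) (b)) (a)) - (mul (mul (d) (c)) (mul (b) (a))))) *~ (Posz 2) + ((mul (mul (mul (b) (c)) (d)) (a)) - (mul (mul (d) (mul (b) (c))) (a))) *~ (Negz 3) + ((mul (mul (mul (b) (d)) (c)) (a)) - (mul (mul (c) (mul (b) (d))) (a))) *~ (Negz 3) + ((mul (mul (mul (d) (b)) (c)) (a)) - (mul (mul (c) (mul (d) (b))) (a))) *~ (Negz 1) + ((mul (mul (b) (mul (d) (c))) (a)) - (mul (mul (mul (d) (c)) (b)) (a))) *~ (Posz 2) + ((mul (mul (b) (c)) (mul (a) (d))) - (mul (mul (c) (b)) (mul (a) (d)))) *~ (Posz 1) + ((mul (mul (b) (c)) (mul (d) (a))) - (mul (mul (c) (b)) (mul (d) (a)))) *~ (Posz 3) + ((mul (mul (b) (d)) (mul (a) (c))) - (mul (mul (d) (b)) (mul (a) (c)))) *~ (Posz 2) + ((mul (mul (b) (d)) (mul (c) (a))) - (mul (mul (d) (b)) (mul (c) (a)))) *~ (Posz 2) + ((mul (mul (c) (d)) (mul (b) (a))) - (mul (mul (d) (c)) (mul (b) (a)))) *~ (Negz 1) + (((mul (mul (mul (b) (c)) (d)) (a)) - (mul (mul (b) (mul (c) (d))) (a))) + ((mul (mul (mul (c) (b)) (d))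 (a)) - (mul (mul (c) (mul (b) (d))) (a)))) *~ (Posz 2) + (((mul (a) (mul (mul (b) (c)) (d))) - (mul (a) (mul (b) (mul (c) (d))))) + ((mul (a) (mul (mul (c) (b)) (d))) - (mul (a) (mul (c) (mul (b) (d)))))) *~ (Posz 1) + (((mul (mul (mul (b) (c)) (d)) (a)) - (mul (mul (b) (mul (c) (d))) (a))) + ((mul (mul (mul (b) (d)) (c)) (a)) - (mul (mul (b) (mul (d) (c))) (a)))) *~ (Negz 1) + (((mul (a) (mul (mul (b) (c)) (d))) - (mul (a) (mul (b) (mul (c) (d))))) + ((mul (a) (mul (mul (b) (d)) (c))) - (mul (a) (mul (b) (mul (d) (c)))))) *~ (Negz 1) + ((mul (mul (mul (b) (c)) (d)) (a)) - (mul (mul (mul (c) (b)) (d)) (a))) *~ (Posz 1) + (((mul (mul (mul (b) (d)) (c)) (a)) - (mul (mul (b) (mul (d) (c))) (a))) + ((mul (mul (mul (d) (b)) (c)) (a)) - (mul (mul (d) (mul (b) (c))) (a)))) *~ (Posz 4) + (((mul (a) (mul (mul (b) (d)) (c))) - (mul (a) (mul (b) (mul (d) (c))))) + ((mul (a) (mul (mul (d) (b)) (c))) - (mul (a) (mul (d) (mul (b) (c)))))) *~ (Negz 0) + (((mul (mul (mul (c) (b)) (d)) (a)) - (mul (mul (c) (mul (b) (d))) (a))) + ((mul (mul (mul (c) (d)) (b)) (a)) - (mul (mul (c) (mul (d) (b))) (a)))) *~ (Posz 2) + (((mul (a) (mul (mul (c) (d)) (b))) - (mul (a) (mul (c) (mul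 (d) (b))))) + ((mul (a) (mul (mul (d) (c)) (b))) - (mul (a) (mul (d) (mul (c) (b)))))) *~ (Posz 1) + (((mul (mul (mul (a) (c)) (d)) (b)) - (mul (mul (a) (mul (c) (d))) (b))) + ((mul (mul (mul (c) (a)) (d)) (b)) - (mul (mul (c) (mul (a) (d))) (b)))) *~ (Posz 4) + (((mul (mul (mul (a) (c)) (d)) (b)) - (mul (mul (a) (mul (c) (d))) (b))) + ((mul (mul (mul (a) (d)) (c)) (b)) - (mul (mul (a) (mul (d) (c))) (b)))) *~ (Negz 2) + (((mul (b) (mul (mul (a) (c)) (d))) - (mul (b) (mul (a) (mul (c) (d))))) + ((mul (b) (mul (mul (a) (d)) (c))) - (mul (b) (mul (a) (mul (d) (c)))))) *~ (Negz 1) + ((mul (mul (mul (a) (c)) (d)) (b)) - (mul (mul (mul (c) (a)) (d)) (b))) *~ (Posz 4) + (((mul (mul (mul (a) (d)) (c)) (b)) - (mul (mul (a) (mul (d) (c))) (b))) + ((mul (mul (mul (d) (a)) (c)) (b)) - (mul (mul (d) (mul (a) (c))) (b)))) *~ (Posz 4) + (((mul (b) (mul (mul (a) (d)) (c))) - (mul (b) (mul (a) (mul (d) (c))))) + ((mul (b) (mul (mul (d) (a)) (c))) - (mul (b) (mul (d) (mul (a) (c)))))) *~ (Posz 2) + (((mul (mul (mul (a) (b)) (d)) (c)) - (mul (mul (a) (mul (b) (d))) (c))) + ((mul (mul (mul (a) (d)) (b)) (c)) - (mul (mul (a) (mul (d) (b))) (c)))) *~ (Negz 2).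
  by lin_solve.
apply: (lin_cancel (D:=3)) => //.
rewrite E ?(F2 (mul (a) (b)) (c) (d)) ?(F2 (mul (a) (c)) (b) (d)) ?(F3 (mul (a) (c)) (b) (d)) ?(F1 (a) (mul (b) (c)) (d)) ?(F2 (a) (mul (b) (c)) (d)) ?(F3 (a) (mul (b) (c)) (d)) ?(F1 (a) (mul (c) (b)) (d)) ?(F2 (a) (mul (c) (b)) (d)) ?(F3 (a) (mul (c) (b)) (d)) ?(F2 (mul (a) (d)) (b) (c)) ?(F1 (mul (d) (a)) (b) (c)) ?(F2 (mul (d) (a)) (b) (c)) ?(F3 (mul (d) (a)) (b) (c)) ?(F1 (a) (mul (b) (d)) (c)) ?(F2 (a) (mul (b) (d)) (c)) ?(F2 (a) (mul (d) (b)) (c)) ?(F3 (a) (mul (d) (b)) (c)) ?(F1 (a) (b) (mul (c) (d))) ?(F2 (a) (b) (mul (c) (d))) ?(F3 (a) (b) (mul (c) (d))) ?(F2 (a) (b) (mul (d) (c))) ?(F3 (mul (a) (c)) (d) (b)) ?(F3 (mul (a) (d)) (c) (b)) ?(F1 (a) (mul (c) (d)) (b)) ?(F1 (a) (mul (d) (c)) (b)) ?(F3 (a) (d) (mul (b) (c))) ?(F3 (a) (d) (mul (c) (b))) ?(F2 (mul (b) (c)) (a) (d)) ?(F2 (mul (c) (b)) (a) (d)) ?(F2 (b) (mul (a) (c)) (d)) ?(F2 (mul (b) (d)) (a) (c)) ?(F2 (mul (d) (b)) (a) (c)) ?(F2 (mul (c) (d)) (a) (b)) ?(F2 (mul (d)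 (c)) (a) (b)) ?(F3 (mul (b) (c)) (d) (a)) ?(F3 (mul (b) (d)) (c) (a)) ?(F3 (mul (d) (b)) (c) (a)) ?(F3 (b) (mul (d) (c)) (a)) ?(F3 (b) (c) (mul (a) (d))) ?(F3 (b) (c) (mul (d) (a))) ?(F3 (b) (d) (mul (a) (c))) ?(F3 (b) (d) (mul (c) (a))) ?(F3 (c) (d) (mul (b) (a))) ?(F1r (b) (c) (d) (a)) ?(F1l (b) (c) (d) (a)) ?(F2r (b) (c) (d) (a)) ?(F2l (b) (c) (d) (a)) ?(F3r (b) (c) (d) (a)) ?(F1r (b) (d) (c) (a)) ?(F1l (b) (d) (c) (a)) ?(F2r (c) (b) (d) (a)) ?(F1l (c) (d) (b) (a)) ?(F1r (a) (c) (d) (b)) ?(F2r (a) (c) (d) (b)) ?(F2l (a) (c) (d) (b)) ?(F3r (a) (c) (d) (b)) ?(F1r (a) (d) (c) (b)) ?(F1l (a) (d) (c) (b)) ?(F2r (a) (b) (d) (c)) ?mul0rz ?addr0 ?add0r //.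
Qed.

Lemma T3_N1N23 (p q r : A) : mul (p) (mul (q) (r)) = (mul (mul (p) (q)) (r)) *~ (Posz 1) + (mul (mul (p) (r)) (q)) *~ (Negz 0) + (mul (r) (mul (p) (q))) *~ (Posz 1) + (mul (r) (mul (q) (p))) *~ (Posz 0).
Proof.
have E : ((mul (p) (mul (q) (r))) - ((mul (mul (p) (q)) (r)) *~ (Posz 1) + (mul (mul (p) (r)) (q)) *~ (Negz 0) + (mul (r) (mul (p) (q))) *~ (Posz 1) + (mul (r) (mul (q) (p))) *~ (Posz 0))) *+ 1 = (((mul (mul (p) (q)) (r)) - (mul (p) (mul (q) (r)))) + ((mul (mul (p) (r)) (q)) - (mul (p) (mul (r) (q))))) *~ (Negz 0) + (((mul (mul (p) (r)) (q)) - (mul (p) (mul (r) (q)))) + ((mul (mul (r) (p)) (q)) - (mul (r) (mul (p) (q))))) *~ (Posz 1) + ((mul (mul (p) (r)) (q)) - (mul (mul (r) (p)) (q))) *~ (Posz 1).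
  by lin_solve.
apply: (lin_cancel (D:=1)) => //.
rewrite E ?(F2 (p) (q) (r)) ?(F1 (p) (r) (q)) ?(F3 (p) (r) (q)) ?mul0rz ?addr0 ?add0r //.
Qed.

Lemma T3_N1N32 (p q r : A) : mul (p) (mul (r) (q)) = (mul (mul (p) (q)) (r)) *~ (Posz 0) + (mul (mul (p) (r)) (q)) *~ (Posz 2) + (mul (r) (mul (p) (q))) *~ (Negz 0) + (mul (r) (mul (q) (p))) *~ (Posz 0).
Proof.
have E : ((mul (p) (mul (r) (q))) - ((mul (mul (p) (q)) (r)) *~ (Posz 0) + (mul (mul (p) (r)) (q)) *~ (Posz 2) + (mul (r) (mul (p) (q))) *~ (Negz 0) + (mul (r) (mul (q) (p))) *~ (Posz 0))) *+ 1 = (((mul (mul (p) (r)) (q)) - (mul (p) (mul (r) (q)))) + ((mul (mul (r) (p)) (q)) - (mul (r) (mul (p) (q))))) *~ (Negz 0) + ((mul (mul (p) (r)) (q)) - (mul (mul (r) (p)) (q))) *~ (Negz 0).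
  by lin_solve.
apply: (lin_cancel (D:=1)) => //.
rewrite E ?(F1 (p) (r) (q)) ?(F3 (p) (r) (q)) ?mul0rz ?addr0 ?add0r //.
Qed.

Lemma T3_N2N13 (p q r : A) : mul (q) (mul (p) (r)) = (mul (mul (p) (q)) (r)) *~ (Posz 1) + (mul (mul (p) (r)) (q)) *~ (Posz 1) + (mul (r) (mul (p) (q))) *~ (Negz 0) + (mul (r) (mul (q) (p))) *~ (Posz 0).
Proof.
have E : ((mul (q) (mul (p) (r))) - ((mul (mul (p) (q)) (r)) *~ (Posz 1) + (mul (mul (p) (r)) (q)) *~ (Posz 1) + (mul (r) (mul (p) (q))) *~ (Negz 0) + (mul (r) (mul (q) (p))) *~ (Posz 0))) *+ 1 = (((mul (mul (p) (q)) (r)) - (mul (p) (mul (q) (r)))) + ((mul (mul (q) (p)) (r)) - (mul (q) (mul (p) (r))))) *~ (Negz 0) + (((mul (mul (p) (q)) (r)) - (mul (p) (mul (q) (r)))) + ((mul (mul (p) (r)) (q)) - (mul (p) (mul (r) (q))))) *~ (Posz 1) + ((mul (mul (p) (q)) (r)) - (mul (mul (q) (p)) (r))) *~ (Negz 0) + (((mul (mul (p) (r)) (q)) - (mul (p) (mul (r) (q)))) + ((mul (mul (r) (p)) (q)) - (mul (r) (mul (p) (q))))) *~ (Negz 0) + ((mul (mul (p) (r)) (q)) - (mul (mul (r) (p)) (q))) *~ (Negz 0).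
  by lin_solve.
apply: (lin_cancel (D:=1)) => //.
rewrite E ?(F1 (p) (q) (r)) ?(F2 (p) (q) (r)) ?(F3 (p) (q) (r)) ?(F1 (p) (r) (q)) ?(F3 (p) (r) (q)) ?mul0rz ?addr0 ?add0r //.
Qed.

Lemma T3_N2N31 (p q r : A) : mul (q) (mul (r) (p)) = (mul (mul (p) (q)) (r)) *~ (Posz 0) + (mul (mul (p) (r)) (q)) *~ (Negz 1) + (mul (r) (mul (p) (q))) *~ (Posz 2) + (mul (r) (mul (q) (p))) *~ (Posz 1).
Proof.
have E : ((mul (q) (mul (r) (p))) - ((mul (mul (p) (q)) (r)) *~ (Posz 0) + (mul (mul (p) (r)) (q)) *~ (Negz 1) + (mul (r) (mul (p) (q))) *~ (Posz 2) + (mul (r) (mul (q) (p))) *~ (Posz 1))) *+ 1 = (((mul (mul (p) (q)) (r)) - (mul (p) (mul (q) (r)))) + ((mul (mul (q) (p)) (r)) - (mul (q) (mul (p) (r))))) *~ (Posz 1) + (((mul (mul (p) (q)) (r)) - (mul (p) (mul (q) (r)))) + ((mul (mul (p) (r)) (q)) - (mul (p) (mul (r) (q))))) *~ (Negz 0) + (((mul (mul (p) (r)) (q)) - (mul (p) (mul (r) (q)))) + ((mul (mul (r) (p)) (q)) - (mul (r) (mul (p) (q))))) *~ (Posz 1) + ((mul (mul (p) (r)) (q)) - (mul (mul (r) (p)) (q))) *~ (Posz 2) + (((mul (mul (q) (p)) (r)) - (mul (q) (mul (p) (r)))) + ((mul (mul (q) (r)) (p)) - (mul (q) (mul (r) (p)))))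 *~ (Negz 0) + (((mul (mul (r) (p)) (q)) - (mul (r) (mul (p) (q)))) + ((mul (mul (r) (q)) (p)) - (mul (r) (mul (q) (p))))) *~ (Posz 1) + ((mul (mul (q) (r)) (p)) - (mul (mul (r) (q)) (p))) *~ (Posz 1).
  by lin_solve.
apply: (lin_cancel (D:=1)) => //.
rewrite E ?(F1 (p) (q) (r)) ?(F2 (p) (q) (r)) ?(F1 (p) (r) (q)) ?(F3 (p) (r) (q)) ?(F2 (q) (p) (r)) ?(F2 (r) (p) (q)) ?(F3 (q) (r) (p)) ?mul0rz ?addr0 ?add0r //.
Qed.

Lemma T3_N3N12 (p q r : A) : mul (r) (mul (p) (q)) = (mul (mul (p) (q)) (r)) *~ (Posz 0) + (mul (mul (p) (r)) (q)) *~ (Posz 0) + (mul (r) (mul (p) (q))) *~ (Posz 1) + (mul (r) (mul (q) (p))) *~ (Posz 0).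
Proof. have _ := HU. have _ := charK0. by lin_solve. Qed.

Lemma T3_N3N21 (p q r : A) : mul (r) (mul (q) (p)) = (mul (mul (p) (q)) (r)) *~ (Posz 0) + (mul (mul (p) (r)) (q)) *~ (Posz 0) + (mul (r) (mul (p) (q))) *~ (Posz 0) + (mul (r) (mul (q) (p))) *~ (Posz 1).
Proof. have _ := HU. have _ := charK0. by lin_solve. Qed.

Lemma T3_NN123 (p q r : A) : mul (mul (p) (q)) (r) = (mul (mul (p) (q)) (r)) *~ (Posz 1) + (mul (mul (p) (r)) (q)) *~ (Posz 0) + (mul (r) (mul (p) (q))) *~ (Posz 0) + (mul (r) (mul (q) (p))) *~ (Posz 0).
Proof. have _ := HU. have _ := charK0. by lin_solve. Qed.

Lemma T3_NN213 (p q r : A) : mul (mul (q) (p)) (r) = (mul (mul (p) (q)) (r)) *~ (Posz 1) + (mul (mul (p) (r)) (q)) *~ (Posz 0) + (mul (r) (mul (p) (q))) *~ (Posz 0) + (mul (r) (mul (q) (p))) *~ (Posz 0).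
Proof.
have E : ((mul (mul (q) (p)) (r)) - ((mul (mul (p) (q)) (r)) *~ (Posz 1) + (mul (mul (p) (r)) (q)) *~ (Posz 0) + (mul (r) (mul (p) (q))) *~ (Posz 0) + (mul (r) (mul (q) (p))) *~ (Posz 0))) *+ 1 = ((mul (mul (p) (q)) (r)) - (mul (mul (q) (p)) (r))) *~ (Negz 0).
  by lin_solve.
apply: (lin_cancel (D:=1)) => //.
rewrite E ?(F3 (p) (q) (r)) ?mul0rz ?addr0 ?add0r //.
Qed.

Lemma T3_NN132 (p q r : A) : mul (mul (p) (r)) (q) = (mul (mul (p) (q)) (r)) *~ (Posz 0) + (mul (mul (p) (r)) (q)) *~ (Posz 1) + (mul (r) (mul (p) (q))) *~ (Posz 0) + (mul (r) (mul (q) (p))) *~ (Posz 0).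
Proof. have _ := HU. have _ := charK0. by lin_solve. Qed.

Lemma T3_NN312 (p q r : A) : mul (mul (r) (p)) (q) = (mul (mul (p) (q)) (r)) *~ (Posz 0) + (mul (mul (p) (r)) (q)) *~ (Posz 1) + (mul (r) (mul (p) (q))) *~ (Posz 0) + (mul (r) (mul (q) (p))) *~ (Posz 0).
Proof.
have E : ((mul (mul (r) (p)) (q)) - ((mul (mul (p) (q)) (r)) *~ (Posz 0) + (mul (mul (p) (r)) (q)) *~ (Posz 1) + (mul (r) (mul (p) (q))) *~ (Posz 0) + (mul (r) (mul (q) (p))) *~ (Posz 0))) *+ 1 = ((mul (mul (p) (r)) (q)) - (mul (mul (r) (p)) (q))) *~ (Negz 0).
  by lin_solve.
apply: (lin_cancel (D:=1)) => //.
rewrite E ?(F3 (p) (r) (q)) ?mul0rz ?addr0 ?add0r //.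
Qed.

Lemma T3_NN231 (p q r : A) : mul (mul (q) (r)) (p) = (mul (mul (p) (q)) (r)) *~ (Posz 0) + (mul (mul (p) (r)) (q)) *~ (Negz 0) + (mul (r) (mul (p) (q))) *~ (Posz 1) + (mul (r) (mul (q) (p))) *~ (Posz 1).
Proof.
have E : ((mul (mul (q) (r)) (p)) - ((mul (mul (p) (q)) (r)) *~ (Posz 0) + (mul (mul (p) (r)) (q)) *~ (Negz 0) + (mul (r) (mul (p) (q))) *~ (Posz 1) + (mul (r) (mul (q) (p))) *~ (Posz 1))) *+ 1 = ((mul (mul (p) (r)) (q)) - (mul (mul (r) (p)) (q))) *~ (Posz 1) + (((mul (mul (r) (p)) (q)) - (mul (r) (mul (p) (q)))) + ((mul (mul (r) (q)) (p)) - (mul (r) (mul (q) (p))))) *~ (Posz 1) + ((mul (mul (q) (r)) (p)) - (mul (mul (r) (q)) (p))) *~ (Posz 1).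
  by lin_solve.
apply: (lin_cancel (D:=1)) => //.
rewrite E ?(F3 (p) (r) (q)) ?(F2 (r) (p) (q)) ?(F3 (q) (r) (p)) ?mul0rz ?addr0 ?add0r //.
Qed.

Lemma T3_NN321 (p q r : A) : mul (mul (r) (q)) (p) = (mul (mul (p) (q)) (r)) *~ (Posz 0) + (mul (mul (p) (r)) (q)) *~ (Negz 0) + (mul (r) (mul (p) (q))) *~ (Posz 1) + (mul (r) (mul (q) (p))) *~ (Posz 1).
Proof.
have E : ((mul (mul (r) (q)) (p)) - ((mul (mul (p) (q)) (r)) *~ (Posz 0) + (mul (mul (p) (r)) (q)) *~ (Negz 0) + (mul (r) (mul (p) (q))) *~ (Posz 1) + (mul (r) (mul (q) (p))) *~ (Posz 1))) *+ 1 = ((mul (mul (p) (r)) (q)) - (mul (mul (r) (p)) (q))) *~ (Posz 1) + (((mul (mul (r) (p)) (q)) - (mul (r) (mul (p) (q)))) + ((mul (mul (r) (q)) (p)) - (mul (r) (mul (q) (p))))) *~ (Posz 1).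
  by lin_solve.
apply: (lin_cancel (D:=1)) => //.
rewrite E ?(F3 (p) (r) (q)) ?(F2 (r) (p) (q)) ?mul0rz ?addr0 ?add0r //.
Qed.
End UAlg.


Lemma filt_nonempty (k N : nat) : (2 <= N)%N -> [seq i <- iota 1 N | i != k] != [::].
Proof.
move=> hN; apply/eqP => h.
have : (if k == 1%N then 2 else 1)%N \in [seq i <- iota 1 N | i != k].
  case: (k =P 1%N) => [->|hk]; rewrite mem_filter mem_iota /=; first lia.
  by apply/andP; split; [apply/eqP => e; apply: hk | lia].
by rewrite h.
Qed.

Lemma perm_filter_last (k N : nat) : k \in iota 1 N ->
  perm_eq (rcons [seq i <- iota 1 N | i != k] k) (iota 1 N).
Proof.
move=> hk; rewrite -cats1.
have -> : [:: k] = [seq i <- iota 1 N | predC (fun i : nat => i != k) i].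
  rewrite (@eq_filter _ _ (pred1 k)); first by rewrite filter_pred1_uniq // iota_uniq.
  by move=> i /=; rewrite negbK.
by rewrite perm_filterC.
Qed.

Lemma leaves_lnorm d h r : leaves (lnorm d (h :: r)) = h :: r.
Proof.
rewrite /lnorm; have -> : h :: r = leaves (Leaf h) ++ r by [].
elim: r (Leaf h) => [|x r IH] m /=; first by rewrite cats0.
by rewrite IH /= -catA.
Qed.

Section T.
Variables (K : fieldType) (A : lmodType K) (mul : A -> A -> A).
Hypothesis HU : U_algebra mul.
Hypothesis charK0 : [pchar K] =i pred0.
Let K1 := K1 HU charK0.
Let K3 := K3 HU charK0.
Let K4 := K4 HU charK0.
Let K4b := K4b HU charK0.
Let K4c := K4c HU charK0.
Let comm3 := comm3 HU.

Section Trees.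
Variable a : nat -> A.
Local Notation ev := (nm_eval mul a).
Definition Fl u s := foldl (fun v i => mul v (a i)) u s.
Definition LN s := if s is h :: t then Fl (a h) t else 0.

Lemma Fl_cons u x s : Fl u (x :: s) = Fl (mul u (a x)) s.
Proof. by []. Qed.
Lemma Fl_rcons u s x : Fl u (rcons s x) = mul (Fl u s) (a x).
Proof. by rewrite /Fl foldl_rcons. Qed.

Lemma ev_fold m s : ev (foldl (fun m i => Node m (Leaf i)) m s) = Fl (ev m) s.
Proof. by elim: s m => [|x s IH] m //=; rewrite IH. Qed.
Lemma leaves_fold m s : leaves (foldl (fun m i => Node m (Leaf i)) m s) = leaves m ++ s.
Proof. by elim: s m => [|x s IH] m /=; rewrite ?cats0 // IH /= -catA. Qed.

Lemma Fswap u x y z r : Fl u (x :: y :: z :: r) = Fl u (y :: x :: z :: r).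
Proof. by rewrite !Fl_cons K1. Qed.

Lemma Fbubble u x s2 r : r != [::] -> Fl u (x :: s2 ++ r) = Fl u (s2 ++ x :: r).
Proof.
move=> hr; elim: s2 u => [|y s2 IH] u; first by [].
rewrite !cat_cons [RHS]Fl_cons -IH.
transitivity (Fl u (y :: x :: s2 ++ r)); last by [].
case: s2 {IH} => [|z s2]; last by rewrite !cat_cons Fswap.
by rewrite !cat0s; case: r hr => [|z r] // _; rewrite Fswap.
Qed.

Lemma perm_mid (x : nat) s2 s3 : perm_eq (s2 ++ x :: s3) (x :: s2 ++ s3).
Proof. by rewrite -cat1s perm_catCA. Qed.

Lemma Fperm k s s' u : perm_eq s s' -> Fl u (s ++ [:: k]) = Fl u (s' ++ [:: k]).
Proof.
elim: s s' u => [|x s IH] s' u.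
  by move=> hp; have /esym/size0nil -> := perm_size hp.
move=> hp; have hx : x \in s' by rewrite -(perm_mem hp) mem_head.
move: hp; case/splitPr: hx => s2 s3 hp.
have hp' : perm_eq s (s2 ++ s3).
  by rewrite -(perm_cons x); apply: (perm_trans hp); apply: perm_mid.
rewrite cat_cons Fl_cons (IH _ _ hp') -Fl_cons -!catA Fbubble //; by case: (s3).
Qed.

Lemma Fcomm x y z r : Fl (mul x y) (z :: r) = Fl (mul y x) (z :: r).
Proof. by rewrite !Fl_cons comm3. Qed.

Lemma LNperm k s s' : perm_eq s s' -> LN (s ++ [:: k]) = LN (s' ++ [:: k]).
Proof.
case: s => [|h s1] hp.
  by have /esym/size0nil -> := perm_size hp.
have hx : h \in s' by rewrite -(perm_mem hp) mem_head.
move: hp; case/splitPr: hx => s2 s3 hp.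
case: s2 hp => [|h' s2] hp /=.
  by apply: Fperm; rewrite -(perm_cons h).
rewrite -catA cat_cons -[in RHS]Fbubble; last by case: (s3).
rewrite [RHS]Fl_cons.
have -> : s2 ++ s3 ++ [:: k] = (s2 ++ s3) ++ [:: k] by rewrite catA.
case E : ((s2 ++ s3) ++ [:: k]) => [|z r]; first by case: (s2 ++ s3) E.
rewrite -Fcomm -E -Fl_cons.
rewrite -cat_cons; apply: Fperm.
rewrite -(perm_cons h); apply: (perm_trans hp).
by rewrite -cat_cons; apply: perm_mid.
Qed.

Lemma leaves_gt0 t : (0 < size (leaves t))%N.
Proof. by elim: t => [x|l IHl r IHr] //=; rewrite size_cat addn_gt0 IHl. Qed.

Lemma leaf1 t : size (leaves t) = 1%N -> exists x, t = Leaf x.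
Proof.
case: t => [x|l r] /=; first by exists x.
by rewrite size_cat; have := leaves_gt0 l; have := leaves_gt0 r; lia.
Qed.

Lemma leaf2 t : size (leaves t) = 2%N -> exists x y, t = Node (Leaf x) (Leaf y).
Proof.
case: t => [x|l r] //= hs.
have := leaves_gt0 l; have := leaves_gt0 r; rewrite size_cat in hs => h1 h2.
have [x ->] : exists x, l = Leaf x by apply: leaf1; lia.
have [y ->] : exists y, r = Leaf y by apply: leaf1; lia.
by exists x, y.
Qed.

Lemma assoc_big l r1 r2 : (4 <= size (leaves l) + size (leaves r1) + size (leaves r2))%N ->
  mul (mul (ev l) (ev r1)) (ev r2) = mul (ev l) (mul (ev r1) (ev r2)).
Proof.
case: l => [x|l1 l2] /=; last by rewrite K4.
case: r1 => [y|r11 r12] /=; last by rewrite K4b.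
by case: r2 => [z|r21 r22] //=; rewrite K4c.
Qed.

Lemma LN_rcons s x : s != [::] -> LN (rcons s x) = mul (LN s) (a x).
Proof. by case: s => [|h s] //= _; rewrite Fl_rcons. Qed.

Lemma tree_LN N : forall t, (size (leaves t) <= N)%N -> (4 <= size (leaves t))%N ->
  ev t = LN (leaves t).
Proof.
elim: N => [|N IHN] t; first by have := leaves_gt0 t; lia.
suff H : forall M l r, (size (leaves r) <= M)%N ->
    (size (leaves l) + size (leaves r) <= N.+1)%N ->
    (4 <= size (leaves l) + size (leaves r))%N ->
    ev (Node l r) = LN (leaves l ++ leaves r).
  case: t => [x|l r] //=; rewrite size_cat => h1 h2.
  exact: (H (size (leaves r))).
elim=> [|M IHM] l r hr hN h4; first by have := leaves_gt0 r; lia.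
case: r hr hN h4 => [k|r1 r2] /= hr hN h4.
- have [h3|h3] := ltnP 3 (size (leaves l)).
  + rewrite (IHN l) //; last by lia.
    by rewrite cats1 LN_rcons // -size_eq0 -lt0n leaves_gt0.
  + case: l hN h4 h3 => [x|l1 l2] /=; first by lia.
    rewrite size_cat => hN h4 h3.
    have g1 := leaves_gt0 l1; have g2 := leaves_gt0 l2.
    have [e1|e1] : size (leaves l1) = 1%N \/ size (leaves l1) = 2%N by lia.
    * have [x ->] := leaf1 e1.
      have [y [z ->]] : exists y z, l2 = Node (Leaf y) (Leaf z) by apply: leaf2; lia.
      by rewrite /= K3.
    * have [x [y ->]] := leaf2 e1.
      have [z ->] : exists z, l2 = Leaf z by apply: leaf1; lia.
      by [].
- rewrite size_cat in hr hN h4.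
  have g1 := leaves_gt0 r1; have g2 := leaves_gt0 r2.
  rewrite -assoc_big; last by lia.
  have -> : leaves l ++ leaves r1 ++ leaves r2 = leaves (Node l r1) ++ leaves r2 by rewrite /= catA.
  apply: (IHM (Node l r1) r2) => /=; rewrite ?size_cat; lia.
Qed.

Lemma ev_lnorm d h r : ev (lnorm d (h :: r)) = LN (h :: r).
Proof. by rewrite /lnorm ev_fold. Qed.

Lemma span_big N t : (4 <= N)%N -> multilinear N t ->
  ev t = ev (nth (Leaf 0) (Ubasis N) (last 0%N (leaves t)).-1).
Proof.
case: N => [|[|[|[|N]]]] // _; set M := N.+4 => ht.
have hs : size (leaves t) = M by rewrite (perm_size ht) size_iota.
case E : (leaves t) / (lastP (leaves t)) => [|s0 k]; first by rewrite E in hs.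
have hk : k \in iota 1 M by rewrite -(perm_mem ht) E mem_rcons mem_head.
have hk1 : (0 < k <= M)%N by move: hk; rewrite mem_iota; lia.
rewrite last_rcons (tree_LN (leqnn _)); last by rewrite hs.
rewrite E /Ubasis -/M (nth_map 0%N); last by rewrite size_iota; lia.
rewrite nth_iota; last by lia.
have -> : (1 + k.-1 = k)%N by lia.
have := filt_nonempty k (isT : (2 <= M)%N).
case F : [seq i <- iota 1 M | i != k] => [|h r] // _.
have -> : ev (Node (lnorm k (h :: r)) (Leaf k)) = LN (rcons (h :: r) k).
  by rewrite LN_rcons // -(ev_lnorm k).
rewrite -F -!cats1; apply: LNperm.
have h1 : perm_eq (rcons s0 k) (rcons [seq i <- iota 1 M | i != k] k).
  by rewrite -E; apply: (perm_trans ht); rewrite perm_sym perm_filter_last.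
by move: h1; rewrite perm_rcons perm_sym perm_rcons perm_cons perm_sym.
Qed.
End Trees.

End T.

Section S. Variable K : fieldType.
Lemma scaleo (k : K) (x : K^o) : k *: x = k * x. Proof. by []. Qed.
Definition A1 := (K^o * K^o)%type.
Definition mul1 (x y : A1) : A1 := (x.1 * y.1, x.1 * y.2).
Lemma ext1 (x y : A1) : x.1 = y.1 -> x.2 = y.2 -> x = y.
Proof. by case: x y => [? ?] [? ?] /= -> ->. Qed.
Lemma U1 : U_algebra mul1.
Proof.
split.
- by move=> k [x1 x2] [y1 y2] [z1 z2]; apply: ext1 => /=; rewrite !scaleo; ring.
- by move=> k [x1 x2] [y1 y2] [z1 z2]; apply: ext1 => /=; rewrite !scaleo; ring.
- by move=> [x1 x2] [y1 y2]; apply: ext1 => /=; ring.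
- by move=> [x1 x2] [y1 y2]; apply: ext1 => /=; ring.
- by move=> [x1 x2] [y1 y2] [z1 z2]; apply: ext1 => /=; ring.
Qed.

Definition A2 := ((K^o * K^o * K^o) * (K^o * K^o * K^o) * K^o)%type.
Definition cross (u v : K^o * K^o * K^o) : K^o * K^o * K^o :=
  (u.1.2 * v.2 - u.2 * v.1.2, u.2 * v.1.1 - u.1.1 * v.2, u.1.1 * v.1.2 - u.1.2 * v.1.1).
Definition dot (u v : K^o * K^o * K^o) : K^o := u.1.1 * v.1.1 + u.1.2 * v.1.2 + u.2 * v.2.
Definition mul2 (x y : A2) : A2 := ((0, cross x.1.1 y.1.1), dot x.1.1 y.1.2).
Lemma ext2 (x y : A2) : x.1.1.1.1 = y.1.1.1.1 -> x.1.1.1.2 = y.1.1.1.2 -> x.1.1.2 = y.1.1.2 ->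
  x.1.2.1.1 = y.1.2.1.1 -> x.1.2.1.2 = y.1.2.1.2 -> x.1.2.2 = y.1.2.2 -> x.2 = y.2 -> x = y.
Proof. by case: x y => [[[[? ?] ?] [[? ?] ?]] ?] [[[[? ?] ?] [[? ?] ?]] ?] /= -> -> -> -> -> -> ->. Qed.
Lemma U2 : U_algebra mul2.
Proof.
split.
- by move=> k [[[[x1 x2] x3] [[x4 x5] x6]] x7] [[[[y1 y2] y3] [[y4 y5] y6]] y7] [[[[z1 z2] z3] [[z4 z5] z6]] z7];
  apply: ext2; rewrite /= /dot /cross /= ?scaleo; ring.
- by move=> k [[[[x1 x2] x3] [[x4 x5] x6]] x7] [[[[y1 y2] y3] [[y4 y5] y6]] y7] [[[[z1 z2] z3] [[z4 z5] z6]] z7];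
  apply: ext2; rewrite /= /dot /cross /= ?scaleo; ring.
- by move=> [[[[x1 x2] x3] [[x4 x5] x6]] x7] [[[[y1 y2] y3] [[y4 y5] y6]] y7];
  apply: ext2; rewrite /= /dot /cross /=; ring.
- by move=> [[[[x1 x2] x3] [[x4 x5] x6]] x7] [[[[y1 y2] y3] [[y4 y5] y6]] y7];
  apply: ext2; rewrite /= /dot /cross /=; ring.
- by move=> [[[[x1 x2] x3] [[x4 x5] x6]] x7] [[[[y1 y2] y3] [[y4 y5] y6]] y7] [[[[z1 z2] z3] [[z4 z5] z6]] z7];
  apply: ext2; rewrite /= /dot /cross /=; ring.
Qed.
End S.


Lemma sum_map_enum (K : fieldType) (A : lmodType K) (ev : nmon -> A) N (c : 'I_N -> K) (B : seq nmon) :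
  \sum_(p <- [seq (c i, nth (Leaf 0) B i) | i <- enum 'I_N]) p.1 *: ev p.2 =
  \sum_(i < N) c i *: ev (nth (Leaf 0) B i).
Proof. by rewrite big_map big_enum. Qed.

Lemma sum_delta (K : fieldType) (A : lmodType K) N (F : nat -> A) j : (j < N)%N ->
  \sum_(i < N) (if (i : nat) == j then 1 else 0) *: F i = F j.
Proof.
move=> hj; rewrite (bigD1 (Ordinal hj)) //= eqxx scale1r big1 ?addr0 // => i.
by rewrite -val_eqE /= => /negbTE ->; rewrite scale0r.
Qed.

Lemma snd_sum (U V : zmodType) (I : Type) (r : seq I) (F : I -> (U * V)%type) :
  (\sum_(i <- r) F i).2 = \sum_(i <- r) (F i).2.
Proof. by elim/big_rec2: _ => // i x y _ <-. Qed.

Lemma perm2 (x y : nat) : perm_eq [:: x; y] [:: 1; 2]%N -> (x = 1 /\ y = 2 \/ x = 2 /\ y = 1)%N.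
Proof.
move=> H.
have hx : x \in [:: 1; 2]%N by rewrite -(perm_mem H) mem_head.
have hy : y \in [:: 1; 2]%N by rewrite -(perm_mem H) !inE eqxx orbT.
have U : uniq [:: x; y] by rewrite (perm_uniq H).
by move: hx hy U; rewrite !inE => /orP [] /eqP -> /orP [] /eqP ->; auto.
Qed.

Lemma perm3 (x y z : nat) : perm_eq [:: x; y; z] [:: 1; 2; 3]%N ->
  [\/ (x = 1 /\ y = 2 /\ z = 3), (x = 1 /\ y = 3 /\ z = 2), (x = 2 /\ y = 1 /\ z = 3) |
      (x = 2 /\ y = 3 /\ z = 1) \/ (x = 3 /\ y = 1 /\ z = 2) \/ (x = 3 /\ y = 2 /\ z = 1)]%N.
Proof.
move=> H.
have hx : x \in [:: 1; 2; 3]%N by rewrite -(perm_mem H) mem_head.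
have hy : y \in [:: 1; 2; 3]%N by rewrite -(perm_mem H) !inE eqxx !orbT.
have hz : z \in [:: 1; 2; 3]%N by rewrite -(perm_mem H) !inE eqxx !orbT.
have U : uniq [:: x; y; z] by rewrite (perm_uniq H).
move: hx hy hz U; rewrite !inE => /or3P [] /eqP -> /or3P [] /eqP -> /or3P [] /eqP -> //= _.
- by constructor 1.
- by constructor 2.
- by constructor 3.
- by constructor 4; left.
- by constructor 4; right; left.
- by constructor 4; right; right.
Qed.


Lemma leaves_basis (k h : nat) r : leaves (Node (lnorm k (h :: r)) (Leaf k)) = rcons (h :: r) k.
Proof. by rewrite /= (leaves_lnorm k) cats1. Qed.

Lemma P1 n : (1 <= n)%N -> all (multilinear n) (Ubasis n).
Proof.
case: n => [//|[|[|[|n]]]] _; [by []|by []|by []|].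
have -> : Ubasis n.+4 = [seq Node (lnorm k [seq i <- iota 1 n.+4 | i != k]) (Leaf k) | k <- iota 1 n.+4] by [].
rewrite all_map; apply/allP => k hk; rewrite inE.
have := filt_nonempty k (isT : (2 <= n.+4)%N).
case F : [seq i <- iota 1 n.+4 | i != k] => [|h r] // _.
rewrite /multilinear.
by rewrite leaves_basis -F perm_filter_last.
Qed.

Ltac try3 L z0 z1 z2 z3 :=
  exists (fun i : 'I_4 => nth 0 [:: z0%:~R; z1%:~R; z2%:~R; z3%:~R] i);
  let B := fresh "B" in let mulB := fresh "mulB" in let HB := fresh "HB" in let a := fresh "a" in
  move=> B mulB HB a; rewrite big_seq1 sum_map_enum /= !big_ord_recl big_ord0 /= !scaler_int ?scale1r;
  rewrite (L _ _ _ HB ltac:(assumption) (a 1%N) (a 2%N) (a 3%N)); lin_solve.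
Ltac solve3 := first [ try3 T3_N1N23 (Posz 1) (Negz 0) (Posz 1) (Posz 0) | try3 T3_N1N32 (Posz 0) (Posz 2) (Negz 0) (Posz 0) | try3 T3_N2N13 (Posz 1) (Posz 1) (Negz 0) (Posz 0) | try3 T3_N2N31 (Posz 0) (Negz 1) (Posz 2) (Posz 1) | try3 T3_N3N12 (Posz 0) (Posz 0) (Posz 1) (Posz 0) | try3 T3_N3N21 (Posz 0) (Posz 0) (Posz 0) (Posz 1) | try3 T3_NN123 (Posz 1) (Posz 0) (Posz 0) (Posz 0) | try3 T3_NN213 (Posz 1) (Posz 0) (Posz 0) (Posz 0) | try3 T3_NN132 (Posz 0) (Posz 1) (Posz 0) (Posz 0) | try3 T3_NN312 (Posz 0) (Posz 1) (Posz 0) (Posz 0) | try3 T3_NN231 (Posz 0) (Negz 0) (Posz 1) (Posz 1) | try3 T3_NN321 (Posz 0) (Negz 0) (Posz 1) (Posz 1) ].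

Lemma P2 (K : fieldType) (charK0 : [pchar K] =i pred0) n : (1 <= n)%N -> forall t, multilinear n t ->
  exists c : 'I_(size (Ubasis n)) -> K,
    U_eq [:: (1, t)] [seq (c i, nth (Leaf 0) (Ubasis n) i) | i <- enum 'I_(size (Ubasis n))].
Proof.
move=> hn t ht; have hs := perm_size ht; rewrite size_iota in hs.
case: n hn ht hs => [//|[|[|[|n]]]] _ ht hs.
- have [x Ex] := leaf1 hs; subst t.
  have : x \in [:: 1%N] by rewrite -(perm_mem ht) mem_head.
  rewrite inE => /eqP Ex; subst x.
  exists (fun _ => 1); move=> B mulB HB a.
  by rewrite big_seq1 sum_map_enum /= big_ord1.
- have [x [y Ex]] := leaf2 hs; subst t.
  case: (perm2 ht) => -[-> ->].
  + exists (fun i : 'I_2 => nth 0 [:: 1; 0] i); move=> B mulB HB a.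
    by rewrite big_seq1 sum_map_enum /= !big_ord_recl big_ord0 /= scale1r scale0r !addr0.
  + exists (fun i : 'I_2 => nth 0 [:: 0; 1] i); move=> B mulB HB a.
    by rewrite big_seq1 sum_map_enum /= !big_ord_recl big_ord0 /= scale1r scale0r add0r addr0.
- case: t ht hs => [x|l r] //= ht; rewrite size_cat => hs.
  have g1 := leaves_gt0 l; have g2 := leaves_gt0 r.
  have [e1|e1] : size (leaves l) = 1%N \/ size (leaves l) = 2%N by lia.
  + have [x Ex] := leaf1 e1; subst l.
    have [y [z Ey]] : exists y z, r = Node (Leaf y) (Leaf z) by apply: leaf2; lia.
    subst r; case: (perm3 ht) => [[-> [-> ->]]|[-> [-> ->]]|[-> [-> ->]]|[[-> [-> ->]]|[[-> [-> ->]]|[-> [-> ->]]]]];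
      solve3.
  + have [x [y Ex]] := leaf2 e1; subst l.
    have [z Ez] : exists z, r = Leaf z by apply: leaf1; lia.
    subst r; case: (perm3 ht) => [[-> [-> ->]]|[-> [-> ->]]|[-> [-> ->]]|[[-> [-> ->]]|[[-> [-> ->]]|[-> [-> ->]]]]];
      solve3.
- set N := n.+4.
  have sz : size (Ubasis N) = N by rewrite /Ubasis size_map size_iota.
  set k := last 0%N (leaves t).
  have hkin : k \in iota 1 N.
    rewrite -(perm_mem ht) /k; case: (leaves t) hs => [|h r] //= _.
    exact: mem_last.
  have hk : (k.-1 < size (Ubasis N))%N by rewrite sz; move: hkin; rewrite mem_iota; lia.
  exists (fun i => if (i : nat) == k.-1 then 1 else 0); move=> B mulB HB a.
  rewrite big_seq1 scale1r sum_map_enum (sum_delta (fun j => nm_eval mulB a (nth (Leaf 0) (Ubasis N) j))) //.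
  exact: (span_big HB charK0 a (isT : (4 <= N)%N) ht).
Qed.


Definition aa (K : fieldType) (j0 : nat) : nat -> A1 K := fun j => if j == j0 then (0, 1) else (1, 0).
Definition ee (K : fieldType) (j : nat) : A2 K :=
  if j == 1%N then ((1, 0, 0), (0, 0, 0), 0) else if j == 2%N then ((0, 1, 0), (0, 0, 0), 0)
  else ((0, 0, 1), (0, 0, 0), 0).

Lemma fst_ev (K : fieldType) (a : nat -> A1 K) t :
  (nm_eval (@mul1 K) a t).1 = \prod_(m <- leaves t) (a m).1.
Proof.
elim: t => [x|l IHl r IHr] /=; first by rewrite big_seq1.
by rewrite big_cat /= -IHl -IHr.
Qed.

Lemma basis_val (K : fieldType) N (i j : nat) : (4 <= N)%N -> (j < N)%N ->
  (nm_eval (@mul1 K) (aa K i.+1) (nth (Leaf 0) (Ubasis N) j)).2 = if j == i then 1 else 0.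
Proof.
case: N => [|[|[|[|N]]]] // _ hj.
rewrite /Ubasis (nth_map 0%N) ?size_iota // nth_iota // add1n.
have := filt_nonempty j.+1 (isT : (2 <= N.+4)%N).
case F : [seq i <- iota 1 N.+4 | i != j.+1] => [|h r] // _.
have -> : (nm_eval (@mul1 K) (aa K i.+1) (Node (lnorm j.+1 (h :: r)) (Leaf j.+1))).2 =
  (nm_eval (@mul1 K) (aa K i.+1) (lnorm j.+1 (h :: r))).1 * (aa K i.+1 j.+1).2 by [].
rewrite fst_ev (leaves_lnorm j.+1) -F.
case: (eqVneq j i) => [->|hji].
  rewrite /aa eqxx mulr1 big1_seq // => m /andP [_]; rewrite mem_filter => /andP [hm _].
  by rewrite (negbTE hm).
by rewrite /aa eqSS (negbTE hji) mulr0.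
Qed.

Lemma P3 (K : fieldType) n : (1 <= n)%N -> forall c : 'I_(size (Ubasis n)) -> K,
  U_eq [seq (c i, nth (Leaf 0) (Ubasis n) i) | i <- enum 'I_(size (Ubasis n))] [::] ->
  forall i, c i = 0.
Proof.
case: n => [//|[|[|[|n]]]] _ c H.
- have := H _ _ (U1 K) (aa K 1). rewrite sum_map_enum big_nil => /(congr1 snd).
  rewrite snd_sum /= big_ord1 /= ?scaleo => h.
  by move=> i; rewrite (ord1 i); apply: (etrans _ h); ring.
- have := H _ _ (U1 K) (aa K 1). rewrite sum_map_enum big_nil => /(congr1 snd).
  rewrite snd_sum /= !big_ord_recl big_ord0 /= ?scaleo => h1.
  have := H _ _ (U1 K) (aa K 2). rewrite sum_map_enum big_nil => /(congr1 snd).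
  rewrite snd_sum /= !big_ord_recl big_ord0 /= ?scaleo => h2.
  move=> i; case: i => [[|[|m]] hm].
  + have -> : Ordinal hm = ord0 by apply: val_inj.
    by apply: (etrans _ h2); ring.
  + have -> : Ordinal hm = lift ord0 ord0 by apply: val_inj.
    by apply: (etrans _ h1); ring.
  + by [].
- have := H _ _ (U1 K) (aa K 3). rewrite sum_map_enum big_nil => /(congr1 snd).
  rewrite snd_sum /= !big_ord_recl big_ord0 /= ?scaleo => h3.
  have := H _ _ (U1 K) (aa K 1). rewrite sum_map_enum big_nil => /(congr1 snd).
  rewrite snd_sum /= !big_ord_recl big_ord0 /= ?scaleo => h1.
  have := H _ _ (U1 K) (aa K 2). rewrite sum_map_enum big_nil => /(congr1 snd).
  rewrite snd_sum /= !big_ord_recl big_ord0 /= ?scaleo => h2.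
  have := H _ _ (U2 K) (@ee K). rewrite sum_map_enum big_nil => /(congr1 snd).
  rewrite snd_sum /= !big_ord_recl big_ord0 /= ?scaleo => h4.
  rewrite /dot /cross /= in h4.
  rewrite !(mul0r, mulr0, mul1r, mulr1, addr0, add0r, subr0, sub0r, mulrN1) in h1 h2 h3 h4.
  rewrite h1 subr0 in h4; rewrite h4 addr0 in h2.
  move=> i; case: i => [[|[|[|[|m]]]] hm].
  + have -> : Ordinal hm = ord0 by apply: val_inj.
    exact: h3.
  + have -> : Ordinal hm = lift ord0 ord0 by apply: val_inj.
    exact: h2.
  + have -> : Ordinal hm = lift ord0 (lift ord0 ord0) by apply: val_inj.
    exact: h4.
  + have -> : Ordinal hm = lift ord0 (lift ord0 (lift ord0 ord0)) by apply: val_inj.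
    exact: h1.
  + by [].
- move=> i; set N := n.+4.
  have sz : size (Ubasis N) = N by rewrite /Ubasis size_map size_iota.
  have := H _ _ (U1 K) (aa K i.+1); rewrite sum_map_enum big_nil => /(congr1 snd).
  rewrite snd_sum => h.
  rewrite (eq_bigr (fun j : 'I_(size (Ubasis N)) => c j * (if (j : nat) == i then 1 else 0))) in h; last first.
    move=> j _; have hjN : (j < N)%N by apply: (leq_trans (ltn_ord j)); rewrite sz.
    by rewrite -(@basis_val K N i j isT hjN).
  rewrite (bigD1 i) //= eqxx mulr1 big1 ?addr0 // in h.
  by move=> j /negbTE; rewrite -val_eqE => ->; rewrite mulr0.
Qed.

Theorem mainTheorem2 (K : fieldType) (charK0 : [pchar K] =i pred0) (n : nat) (hn : (1 <= n)%N) :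
  (* the basis elements are multilinear monomials of degree n *)
  all (multilinear n) (Ubasis n) /\
  (* they span U_n: every multilinear monomial is, modulo the identities of U,
     a K-linear combination of them *)
  (forall t : nmon, multilinear n t ->
     exists c : 'I_(size (Ubasis n)) -> K,
       U_eq [:: (1, t)] [seq (c i, nth (Leaf 0) (Ubasis n) i) | i <- enum 'I_(size (Ubasis n))]) /\
  (* they are linearly independent in U_n *)
  (forall c : 'I_(size (Ubasis n)) -> K,
     U_eq [seq (c i, nth (Leaf 0) (Ubasis n) i) | i <- enum 'I_(size (Ubasis n))] [::] ->
     forall i, c i = 0).
Proof.
split; first exact: P1.
split; first exact: P2.
exact: P3.
Qed.
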